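(* Assume (A2), (A3) and (P1). Then there is a constant $c$, independent of $N$, such that for every data vector $y$ the (unique) solution $(X,U)$ of the quadratic program (QP) satisfies $$\|X\|_\omega\le c\|y\|_\infty\quad\text{and}\quad\|U\|_\omega\le c\|y\|_\infty,$$ where $\|X\|_\omega^2=|X_N|^2+\sum_{i=1}^N\omega_i|X_i|^2$, $\|U\|_\omega^2=\sum_{i=1}^N\omega_i|U_i|^2$, and $\|y\|_\infty$ is the maximum Euclidean norm of the blocks $y_{11},\dots,y_{1N},y_2,y_3,y_{41},\dots,y_{4,N-1},y_5,y_{61},\dots,y_{6N}$.
   Context: Radau collocation data: for an integer $N\ge 2$, let $-1<\tau_1<\dots<\tau_N=1$ and $\omega_1,\dots,\omega_N>0$ be the nodes and weights of the $N$-point Gauss–Radau quadrature rule on $[-1,1]$ with fixed node $+1$ ($\sum_i\omega_i=2$). Set $\tau_0=-1$. For $0\le j\le N$ let $L_j(\tau)=\prod_{i=0,i\ne j}^{N}\frac{\tau-\tau_i}{\tau_j-\tau_i}$ and let $D$ be the $N\times(N+1)$ matrix $D_{ij}=L_j'(\tau_i)$, $1\le i\le N$, $0\le j\le N$; $D_{1:N}$ is the submatrix of columns $1,\dots,N$. Matrix $\|\cdot\|_\infty$ is the largest absolute row sum; $|\cdot|$ is the Euclidean norm. (P1): $D_{1:N}$ is invertible and $\|D_{1:N}^{-1}\|_\infty\le2$. Problem data: $f:\mathbb{R}^n\times\mathbb{R}^m\to\mathbb{R}^n$, $C:\mathbb{R}^n\to\mathbb{R}$ twice continuously differentiable near the relevant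 points, $H(x,u,\lambda)=\lambda^{\mathsf T}f(x,u)$, and $(x^*,u^*,\lambda^* )$ a given continuous triple on $[-1,1]$. With $H$-derivatives evaluated at $(x^*(\tau_i),u^*(\tau_i),\lambda^*(\tau_i))$: $A_i=\nabla_xf(x^*(\tau_i),u^*(\tau_i))$, $B_i=\nabla_uf(x^*(\tau_i),u^*(\tau_i))$, $Q_i=\nabla_{xx}H$, $S_i=\nabla_{xu}H$, $R_i=\nabla_{uu}H$, $T=\nabla^2C(x^*(1))$. (A2): for some $\alpha>0$ the smallest eigenvalues of $\nabla^2C(x^*(1))$ and of $\nabla^2_{(x,u)}H(x^*(t),u^*(t),\lambda^*(t))$ exceed $\alpha$ uniformly in $t\in[-1,1]$. (A3): $\|\nabla_xf(x^*(t),u^*(t))\|_\infty\le1/4$ and $\|\nabla_xf(x^*(t),u^*(t))^{\mathsf T}\|_\infty\le1/4$ for all $t$. Data $y$: $y_{1i}\in\mathbb{R}^n$ ($1\le i\le N$), $y_2,y_3,y_5\in\mathbb{R}^n$, $y_{4i}\in\mathbb{R}^n$ ($1\le i<N$), $y_{6i}\in\mathbb{R}^m$ ($1\le i\le N$); set $y_{4N}:=y_5$. (QP): minimize over $X=(X_0,\dots,X_N)$, $U=(U_1,\dots,U_N)$ the function $\tfrac12\mathcal{Q}(X,U)+\mathcal{L}(X,U)$ subject to $\sum_{j=0}^ND_{ij}X_j=A_iX_i+B_iU_i+y_{1i}$ ($1\le i\le N$), $X_0=y_2$, where $\mathcal{Q}(X,U)=X_N^{\mathsf T}TX_N+\sum_{i=1}^N\omega_i(X_i^{\mathsf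 T}Q_iX_i+2X_i^{\mathsf T}S_iU_i+U_i^{\mathsf T}R_iU_i)$ and $\mathcal{L}(X,U)=X_0^{\mathsf T}\big(y_3+\sum_{i=1}^N\omega_iy_{4i}\big)-\sum_{i=1}^N\omega_i(y_{4i}^{\mathsf T}X_i+y_{6i}^{\mathsf T}U_i)$. *)

(* Defs.v *)
(* Stdlib reals.  Vectors of R^d are functions nat -> R of which only
   the coordinates 0..d-1 are used; matrices are nat -> nat -> R. *)
From Stdlib Require Import Reals Lra Lia.
Open Scope R_scope.

Definition vec := nat -> R.
Definition mat := nat -> nat -> R.

Fixpoint sumR (k : nat) (F : nat -> R) : R :=
  match k with O => 0 | S k' => sumR k' F + F k' end.
Fixpoint prodR (k : nat) (F : nat -> R) : R :=
  match k with O => 1 | S k' => prodR k' F * F k' end.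
(* maxR k F = max(0, F 0, ..., F (k-1)) ; used only for nonnegative F *)
Fixpoint maxR (k : nat) (F : nat -> R) : R :=
  match k with O => 0 | S k' => Rmax (maxR k' F) (F k') end.

Definition sum1 (k : nat) (F : nat -> R) : R := sumR k (fun i => F (S i)).
Definition max1 (k : nat) (F : nat -> R) : R := maxR k (fun i => F (S i)).

Definition dot (d : nat) (a b : vec) : R := sumR d (fun k => a k * b k).
Definition enorm (d : nat) (a : vec) : R := sqrt (dot d a a).
Definition vsub (a b : vec) : vec := fun k => a k - b k.
Definition mv (d : nat) (M : mat) (v : vec) : vec :=
  fun k => sumR d (fun l => M k l * v l).
Definition trm (M : mat) : mat := fun k l => M l k.
Definition inf_norm (r c : nat) (M : mat) : R :=
  maxR r (fun k => sumR c (fun l => Rabs (M k l))).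
Definition qform (d1 d2 : nat) (M : mat) (a b : vec) : R :=
  sumR d1 (fun k => sumR d2 (fun l => a k * M k l * b l)).

Definition is_eigenvalue (d : nat) (M : mat) (a : R) : Prop :=
  exists v : vec, (exists k, (k < d)%nat /\ v k <> 0) /\
    forall k, (k < d)%nat -> mv d M v k = a * v k.
(* "the smallest eigenvalue of M exceeds alpha" (M is a symmetric Hessian,
   so all its eigenvalues are real) *)
Definition smallest_eigenvalue_gt (d : nat) (M : mat) (alpha : R) : Prop :=
  forall a, is_eigenvalue d M a -> alpha < a.

Definition upd (v : vec) (i : nat) (s : R) : vec :=
  fun k => if Nat.eqb k i then s else v k.

Definition has_partial1 (G : vec -> R) (x : vec) (i : nat) (dv : R) : Prop :=
  derivable_pt_lim (fun s => G (upd x i s)) (x i) dv.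

(* partial derivatives of G : R^n x R^m -> R w.r.t. coordinate i of
   z = (x,u) in R^(n+m): i < n is x_i, n <= i < n+m is u_(i-n) *)
Definition zupd (n : nat) (x u : vec) (i : nat) (s : R) : vec * vec :=
  if Nat.ltb i n then (upd x i s, u) else (x, upd u (i - n)%nat s).
Definition zcoord (n : nat) (x u : vec) (i : nat) : R :=
  if Nat.ltb i n then x i else u (i - n)%nat.
Definition has_partial2 (n : nat) (G : vec -> vec -> R) (x u : vec) (i : nat) (dv : R) : Prop :=
  derivable_pt_lim (fun s => G (fst (zupd n x u i s)) (snd (zupd n x u i s)))
    (zcoord n x u i) dv.

Definition dist1 (d : nat) (x x' : vec) : R := enorm d (vsub x x').
Definition dist2 (n m : nat) (x u x' u' : vec) : R :=
  sqrt (dot n (vsub x x') (vsub x x') + dot m (vsub u u') (vsub u u')).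

Definition cont1 (d : nat) (G : vec -> R) (x : vec) : Prop :=
  forall eps, 0 < eps -> exists del, 0 < del /\
    forall x', dist1 d x' x < del -> Rabs (G x' - G x) < eps.
Definition cont2 (n m : nat) (G : vec -> vec -> R) (x u : vec) : Prop :=
  forall eps, 0 < eps -> exists del, 0 < del /\
    forall x' u', dist2 n m x' u' x u < del -> Rabs (G x' u' - G x u) < eps.

Definition open1 (d : nat) (O : vec -> Prop) : Prop :=
  forall x, O x -> exists r, 0 < r /\ forall x', dist1 d x' x < r -> O x'.
Definition open2 (n m : nat) (O : vec -> vec -> Prop) : Prop :=
  forall x u, O x u -> exists r, 0 < r /\
    forall x' u', dist2 n m x' u' x u < r -> O x' u'.

(* f : R^n x R^m -> R^n is C^2 on O, with first partials
   Df k x u i = d f_k / d z_i and second partials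
   D2f k x u i j = d/dz_j (d f_k / d z_i). *)
Definition f_C2_on (n m : nat) (f : vec -> vec -> vec)
  (Df : nat -> vec -> vec -> nat -> R) (D2f : nat -> vec -> vec -> nat -> nat -> R)
  (O : vec -> vec -> Prop) : Prop :=
  forall x u, O x u -> forall k, (k < n)%nat ->
    cont2 n m (fun x u => f x u k) x u /\
    forall i, (i < n + m)%nat ->
      has_partial2 n (fun x u => f x u k) x u i (Df k x u i) /\
      cont2 n m (fun x u => Df k x u i) x u /\
      forall j, (j < n + m)%nat ->
        has_partial2 n (fun x u => Df k x u i) x u j (D2f k x u i j) /\
        cont2 n m (fun x u => D2f k x u i j) x u.

Definition f_C2_near_traj (n m : nat) (f : vec -> vec -> vec)
  (Df : nat -> vec -> vec -> nat -> R) (D2f : nat -> vec -> vec -> nat -> nat -> R)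
  (xs us : R -> vec) : Prop :=
  exists O, open2 n m O /\ (forall t, -1 <= t <= 1 -> O (xs t) (us t)) /\
    f_C2_on n m f Df D2f O.

Definition C_C2_near (n : nat) (C : vec -> R) (DC : vec -> nat -> R)
  (D2C : vec -> nat -> nat -> R) (x0 : vec) : Prop :=
  exists O, open1 n O /\ O x0 /\
    forall x, O x -> cont1 n C x /\
      forall i, (i < n)%nat ->
        has_partial1 C x i (DC x i) /\ cont1 n (fun x => DC x i) x /\
        forall j, (j < n)%nat ->
          has_partial1 (fun x => DC x i) x j (D2C x i j) /\
          cont1 n (fun x => D2C x i j) x.

Definition cont_traj (d : nat) (g : R -> vec) : Prop :=
  forall t, -1 <= t <= 1 -> forall eps, 0 < eps -> exists del, 0 < del /\
    forall t', -1 <= t' <= 1 -> Rabs (t' - t) < del -> dist1 d (g t') (g t) < eps.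

Definition Amat (Df : nat -> vec -> vec -> nat -> R) (xs us : R -> vec) (t : R) : mat :=
  fun k l => Df k (xs t) (us t) l.
Definition Bmat (n : nat) (Df : nat -> vec -> vec -> nat -> R) (xs us : R -> vec) (t : R) : mat :=
  fun k l => Df k (xs t) (us t) (n + l)%nat.
(* Hessian w.r.t. (x,u) of H(x,u,lambda) = lambda^T f(x,u) at (x*(t),u*(t),lambda*(t)),
   an (n+m) x (n+m) matrix *)
Definition HessH (n : nat) (D2f : nat -> vec -> vec -> nat -> nat -> R)
  (xs us ls : R -> vec) (t : R) : mat :=
  fun i j => sumR n (fun k => ls t k * D2f k (xs t) (us t) i j).
Definition Qmat n D2f xs us ls t : mat := fun i j => HessH n D2f xs us ls t i j.
Definition Smat n D2f xs us ls t : mat := fun i j => HessH n D2f xs us ls t i (n + j)%nat.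
Definition Rmat n D2f xs us ls t : mat := fun i j => HessH n D2f xs us ls t (n + i)%nat (n + j)%nat.

(* tau 0 = -1 (convention), -1 < tau_1 < ... < tau_N = 1, w_i > 0, and the rule
   sum_{i=1}^N w_i p(tau_i) is exact for all polynomials of degree <= 2N-2,
   i.e. the N-point Gauss-Radau rule with fixed node +1. *)
Definition radau (N : nat) (tau w : nat -> R) : Prop :=
  tau O = -1 /\ -1 < tau 1%nat /\
  (forall i, (1 <= i < N)%nat -> tau i < tau (S i)) /\ tau N = 1 /\
  (forall i, (1 <= i <= N)%nat -> 0 < w i) /\
  forall k, (k <= 2 * N - 2)%nat ->
    sum1 N (fun i => w i * tau i ^ k) = (1 - (-1) ^ (S k)) / INR (S k).

Definition lagrange (N : nat) (tau : nat -> R) (j : nat) (s : R) : R :=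
  prodR (S N) (fun i => if Nat.eqb i j then 1 else (s - tau i) / (tau j - tau i)).

Definition is_diff_matrix (N : nat) (tau : nat -> R) (D : mat) : Prop :=
  forall i j, (1 <= i <= N)%nat -> (j <= N)%nat ->
    derivable_pt_lim (lagrange N tau j) (tau i) (D i j).

Definition P1 (N : nat) (D : mat) : Prop :=
  exists Dinv : mat,
    (forall i j, (1 <= i <= N)%nat -> (1 <= j <= N)%nat ->
       sum1 N (fun k => D i k * Dinv k j) = if Nat.eqb i j then 1 else 0) /\
    (forall i j, (1 <= i <= N)%nat -> (1 <= j <= N)%nat ->
       sum1 N (fun k => Dinv i k * D k j) = if Nat.eqb i j then 1 else 0) /\
    (forall i, (1 <= i <= N)%nat -> sum1 N (fun j => Rabs (Dinv i j)) <= 2).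

Definition y4ext (N : nat) (y4 : nat -> vec) (y5 : vec) (i : nat) : vec :=
  if Nat.eqb i N then y5 else y4 i.

Definition QP_feasible (n m N : nat) (D : mat) (A B : nat -> mat)
  (y1 : nat -> vec) (y2 : vec) (X U : nat -> vec) : Prop :=
  (forall k, (k < n)%nat -> X O k = y2 k) /\
  forall i, (1 <= i <= N)%nat -> forall k, (k < n)%nat ->
    sumR (S N) (fun j => D i j * X j k) =
      mv n (A i) (X i) k + mv m (B i) (U i) k + y1 i k.

Definition QP_cost (n m N : nat) (w : nat -> R) (T : mat) (Q S Rm : nat -> mat)
  (y3 : vec) (y4 : nat -> vec) (y5 : vec) (y6 : nat -> vec) (X U : nat -> vec) : R :=
  / 2 * (qform n n T (X N) (X N) +
         sum1 N (fun i => w i * (qform n n (Q i) (X i) (X i)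
                                 + 2 * qform n m (S i) (X i) (U i)
                                 + qform m m (Rm i) (U i) (U i))))
  + (dot n (X O) (fun k => y3 k + sum1 N (fun i => w i * y4ext N y4 y5 i k))
     - sum1 N (fun i => w i * (dot n (y4ext N y4 y5 i) (X i) + dot m (y6 i) (U i)))).

Definition QP_solution (n m N : nat) (w : nat -> R) (D : mat) (A B Q S Rm : nat -> mat)
  (T : mat) (y1 : nat -> vec) (y2 y3 : vec) (y4 : nat -> vec) (y5 : vec)
  (y6 : nat -> vec) (X U : nat -> vec) : Prop :=
  QP_feasible n m N D A B y1 y2 X U /\
  forall X' U', QP_feasible n m N D A B y1 y2 X' U' ->
    QP_cost n m N w T Q S Rm y3 y4 y5 y6 X U <= QP_cost n m N w T Q S Rm y3 y4 y5 y6 X' U'.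

Definition Xnorm (n N : nat) (w : nat -> R) (X : nat -> vec) : R :=
  sqrt (dot n (X N) (X N) + sum1 N (fun i => w i * dot n (X i) (X i))).
Definition Unorm (m N : nat) (w : nat -> R) (U : nat -> vec) : R :=
  sqrt (sum1 N (fun i => w i * dot m (U i) (U i))).
Definition ynorm (n m N : nat) (y1 : nat -> vec) (y2 y3 : vec) (y4 : nat -> vec)
  (y5 : vec) (y6 : nat -> vec) : R :=
  Rmax (max1 N (fun i => enorm n (y1 i)))
   (Rmax (enorm n y2)
    (Rmax (enorm n y3)
     (Rmax (max1 (N - 1)%nat (fun i => enorm n (y4 i)))
      (Rmax (enorm n y5) (max1 N (fun i => enorm m (y6 i))))))).

(* Main.v *)
Require Import Defs.
From Stdlib Require Import Reals Lra Lia Psatz FunctionalExtensionality Bool.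
Open Scope R_scope.

Lemma sumR_ext : forall k F G, (forall i, (i < k)%nat -> F i = G i) -> sumR k F = sumR k G.
Proof. induction k; intros; simpl; auto. rewrite (IHk F G); [rewrite (H k)|]; auto; intros; apply H; lia. Qed.

Lemma sumR_plus : forall k F G, sumR k (fun i => F i + G i) = sumR k F + sumR k G.
Proof. induction k; intros; simpl; [ring|rewrite IHk; ring]. Qed.

Lemma sumR_scal : forall k c F, sumR k (fun i => c * F i) = c * sumR k F.
Proof. induction k; intros; simpl; [ring|rewrite IHk; ring]. Qed.

Lemma sumR_opp : forall k F, sumR k (fun i => - F i) = - sumR k F.
Proof. induction k; intros; simpl; [ring|rewrite IHk; ring]. Qed.

Lemma sumR_zero : forall k F, (forall i, (i < k)%nat -> F i = 0) -> sumR k F = 0.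
Proof. intros. rewrite (sumR_ext k F (fun _ => 0)) by auto. clear. induction k; simpl; [ring|rewrite IHk; ring]. Qed.

Lemma sumR_le : forall k F G, (forall i, (i < k)%nat -> F i <= G i) -> sumR k F <= sumR k G.
Proof. induction k; intros; simpl; [lra|]. assert (F k <= G k) by (apply H; lia).
 assert (sumR k F <= sumR k G) by (apply IHk; intros; apply H; lia). lra. Qed.

Lemma sumR_nonneg : forall k F, (forall i, (i < k)%nat -> 0 <= F i) -> 0 <= sumR k F.
Proof. intros. replace 0 with (sumR k (fun _ => 0)). apply sumR_le; auto.
 clear; induction k; simpl; [auto|rewrite IHk; ring]. Qed.

Lemma sumR_abs : forall k F, Rabs (sumR k F) <= sumR k (fun i => Rabs (F i)).
Proof. induction k; intros; simpl. rewrite Rabs_R0; lra.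
 eapply Rle_trans. apply Rabs_triang. specialize (IHk F). lra. Qed.

Lemma sumR_swap : forall a b (F : nat -> nat -> R),
  sumR a (fun k => sumR b (fun l => F k l)) = sumR b (fun l => sumR a (fun k => F k l)).
Proof. induction a; intros; simpl. symmetry; apply sumR_zero; auto.
 rewrite IHa. rewrite <- sumR_plus. reflexivity. Qed.

Lemma sumR_split : forall b a F, sumR (a + b) F = sumR a F + sumR b (fun k => F (a + k)%nat).
Proof. induction b; intros; simpl. rewrite Nat.add_0_r; ring.
 rewrite Nat.add_succ_r. simpl. rewrite IHb. ring. Qed.

Lemma sumR_shift : forall k F, sumR (S k) F = F O + sumR k (fun i => F (S i)).
Proof. induction k; intros. simpl; ring. change (sumR (S (S k)) F) with (sumR (S k) F + F (S k)).
 rewrite IHk. simpl. ring. Qed.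

Lemma sumR_single : forall k j c, sumR k (fun i => if Nat.eqb i j then c else 0) = if Nat.ltb j k then c else 0.
Proof. induction k; intros. simpl; auto.
 change (sumR (S k) (fun i => if Nat.eqb i j then c else 0)) with (sumR k (fun i => if Nat.eqb i j then c else 0) + (if Nat.eqb k j then c else 0)).
 rewrite IHk.
 destruct (Nat.eqb_spec k j); destruct (Nat.ltb_spec j k); destruct (Nat.ltb_spec j (S k)); try lia; ring. Qed.

Lemma sum1_ext : forall k F G, (forall i, (1 <= i <= k)%nat -> F i = G i) -> sum1 k F = sum1 k G.
Proof. intros; unfold sum1; apply sumR_ext; intros; apply H; lia. Qed.
Lemma sum1_le : forall k F G, (forall i, (1 <= i <= k)%nat -> F i <= G i) -> sum1 k F <= sum1 k G.
Proof. intros; unfold sum1; apply sumR_le; intros; apply H; lia. Qed.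
Lemma sum1_nonneg : forall k F, (forall i, (1 <= i <= k)%nat -> 0 <= F i) -> 0 <= sum1 k F.
Proof. intros; unfold sum1; apply sumR_nonneg; intros; apply H; lia. Qed.
Lemma sum1_plus : forall k F G, sum1 k (fun i => F i + G i) = sum1 k F + sum1 k G.
Proof. intros; unfold sum1; apply sumR_plus. Qed.
Lemma sum1_scal : forall k c F, sum1 k (fun i => c * F i) = c * sum1 k F.
Proof. intros; unfold sum1; apply sumR_scal. Qed.
Lemma sum1_abs : forall k F, Rabs (sum1 k F) <= sum1 k (fun i => Rabs (F i)).
Proof. intros; unfold sum1; apply sumR_abs. Qed.

Lemma maxR_ge : forall k F i, (i < k)%nat -> F i <= maxR k F.
Proof. induction k; intros. lia. simpl. destruct (Nat.eq_dec i k). subst; apply Rmax_r.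
 eapply Rle_trans; [apply IHk; lia| apply Rmax_l]. Qed.
Lemma maxR_nonneg : forall k F, 0 <= maxR k F.
Proof. induction k; intros; simpl. lra. eapply Rle_trans; [apply IHk|apply Rmax_l]. Qed.
Lemma maxR_le : forall k F b, 0 <= b -> (forall i, (i < k)%nat -> F i <= b) -> maxR k F <= b.
Proof. induction k; intros; simpl. auto. apply Rmax_lub. apply IHk; auto. apply H0; lia. Qed.
Lemma max1_ge : forall k F i, (1 <= i <= k)%nat -> F i <= max1 k F.
Proof. intros. unfold max1. replace i with (S (i - 1)) by lia. apply (maxR_ge k (fun i => F (S i))). lia. Qed.
Lemma max1_nonneg : forall k F, 0 <= max1 k F.
Proof. intros; apply maxR_nonneg. Qed.

Lemma dot_sq_nonneg : forall d a, 0 <= dot d a a.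
Proof. intros; unfold dot; apply sumR_nonneg; intros; nra. Qed.
Lemma dot_ge_coord : forall d a k, (k < d)%nat -> a k * a k <= dot d a a.
Proof. induction d; intros. lia. unfold dot in *; simpl. destruct (Nat.eq_dec k d).
 subst. pose proof (dot_sq_nonneg d a); unfold dot in H0; lra.
 assert (a k * a k <= sumR d (fun k => a k * a k)) by (apply IHd; lia). nra. Qed.
Lemma enorm_ge_coord : forall d a k, (k < d)%nat -> Rabs (a k) <= enorm d a.
Proof. intros. unfold enorm. rewrite <- sqrt_Rsqr_abs. apply sqrt_le_1_alt.
 unfold Rsqr. apply dot_ge_coord; auto. Qed.
Lemma enorm_nonneg : forall d a, 0 <= enorm d a.
Proof. intros; apply sqrt_pos. Qed.

Fixpoint IsPoly (d : nat) (f : R -> R) : Prop :=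
  match d with
  | O => exists c, forall s, f s = c
  | S d' => exists g c, IsPoly d' g /\ forall s, f s = s * g s + c
  end.

Lemma IsPoly_ext : forall d f g, (forall s, f s = g s) -> IsPoly d f -> IsPoly d g.
Proof. destruct d; simpl; intros f g E [a Ha].
 exists a; intros; rewrite <- E; auto.
 destruct Ha as [c [H1 H2]]. exists a, c; split; auto; intros; rewrite <- E; auto. Qed.

Lemma IsPoly_const : forall d c, IsPoly d (fun _ => c).
Proof. induction d; simpl; intros. exists c; auto. exists (fun _ => 0), c; split; auto; intros; ring. Qed.

Lemma IsPoly_S : forall d f, IsPoly d f -> IsPoly (S d) f.
Proof. induction d; intros f H.
 destruct H as [c Hc]. simpl. exists (fun _ => 0), c. split. exists 0; auto. intros; rewrite Hc; ring.
 destruct H as [g [c [Hg Hf]]]. exists g, c. split; auto. Qed.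

Lemma IsPoly_plus : forall d f g, IsPoly d f -> IsPoly d g -> IsPoly d (fun s => f s + g s).
Proof. induction d; simpl; intros f g [a Ha] [b Hb].
 exists (a + b); intros; rewrite Ha, Hb; auto.
 destruct Ha as [c [Ha1 Ha2]]. destruct Hb as [e [Hb1 Hb2]].
 exists (fun s => a s + b s), (c + e). split. apply IHd; auto. intros; rewrite Ha2, Hb2; ring. Qed.

Lemma IsPoly_scal : forall d k f, IsPoly d f -> IsPoly d (fun s => k * f s).
Proof. induction d; simpl; intros k f [a Ha].
 exists (k * a); intros; rewrite Ha; auto.
 destruct Ha as [c [H1 H2]]. exists (fun s => k * a s), (k * c). split. apply IHd; auto.
 intros; rewrite H2; ring. Qed.

Lemma IsPoly_mulX : forall d f, IsPoly d f -> IsPoly (S d) (fun s => s * f s).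
Proof. intros. exists f, 0. split; auto. intros; ring. Qed.

Lemma IsPoly_lin : forall d f b k, IsPoly d f -> IsPoly (S d) (fun s => f s * ((s - b) * k)).
Proof. intros. apply IsPoly_ext with (fun s => k * (s * f s) + (- (b * k)) * f s).
 intros; ring. apply IsPoly_plus. apply IsPoly_scal, IsPoly_mulX; auto.
 apply IsPoly_S, IsPoly_scal; auto. Qed.

Lemma IsPoly_factor : forall d f r, IsPoly (S d) f -> f r = 0 ->
  exists q, IsPoly d q /\ forall s, f s = (s - r) * q s.
Proof. induction d; intros f r H Hr.
 destruct H as [g [c [[a Ha] Hf]]]. exists (fun _ => a). split. exists a; auto.
 intros. rewrite Hf in *. rewrite Ha in *. assert (c = - r * a) by lra. subst. ring.
 destruct H as [g [c [Hg Hf]]].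
 destruct (IHd (fun s => g s - g r) r) as [q' [Hq' Hq'e]].
 apply IsPoly_plus; auto. apply IsPoly_const. ring.
 exists (fun s => s * q' s + g r). split.
 apply IsPoly_plus. apply IsPoly_mulX; auto. apply IsPoly_const.
 intros. rewrite Hf in *. assert (c = - r * g r) by lra. subst.
 specialize (Hq'e s). replace (g s) with ((g s - g r) + g r) by ring. rewrite Hq'e. ring. Qed.

Lemma IsPoly_roots : forall d f (r : nat -> R),
  IsPoly d f -> (forall i j, (i <= d)%nat -> (j <= d)%nat -> i <> j -> r i <> r j) ->
  (forall i, (i <= d)%nat -> f (r i) = 0) -> forall s, f s = 0.
Proof. induction d; intros f r H Hd Hz s.
 destruct H as [c Hc]. rewrite Hc. rewrite <- (Hc (r O)). apply Hz; lia.
 destruct (IsPoly_factor d f (r (S d)) H) as [q [Hq Hqe]]. apply Hz; lia.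
 rewrite Hqe. replace (q s) with 0. ring. symmetry.
 apply (IHd q r Hq). intros; apply Hd; lia.
 intros i Hi. assert (r i - r (S d) <> 0). { assert (r i <> r (S d)) by (apply Hd; lia). lra. }
 specialize (Hqe (r i)). rewrite Hz in Hqe by lia.
 symmetry in Hqe. apply Rmult_integral in Hqe as [|]; auto. contradiction. Qed.

Lemma prodR_zero : forall k F j, (j < k)%nat -> F j = 0 -> prodR k F = 0.
Proof. induction k; intros. lia. simpl. destruct (Nat.eq_dec j k). subst. rewrite H0; ring.
 rewrite (IHk F j); [ring|lia|auto]. Qed.
Lemma prodR_one : forall k F, (forall i, (i < k)%nat -> F i = 1) -> prodR k F = 1.
Proof. induction k; intros; simpl. auto. rewrite IHk, H; [ring|lia|intros; apply H; lia]. Qed.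

Lemma lagrange_node : forall N tau j k, (j <= N)%nat -> (k <= N)%nat ->
  (forall a b, (a <= N)%nat -> (b <= N)%nat -> a <> b -> tau a <> tau b) ->
  lagrange N tau j (tau k) = if Nat.eqb j k then 1 else 0.
Proof. intros. unfold lagrange. destruct (Nat.eqb_spec j k).
 subst. apply prodR_one. intros. destruct (Nat.eqb_spec i k). auto.
 field. assert (tau k <> tau i) by (apply H1; lia). lra.
 apply (prodR_zero _ _ k). lia. destruct (Nat.eqb_spec k j). lia.
 unfold Rdiv; ring. Qed.

Lemma lagrange_poly_gen : forall (tau : nat -> R) j k, IsPoly (if Nat.ltb j k then k - 1 else k)%nat
  (fun s => prodR k (fun i => if Nat.eqb i j then 1 else (s - tau i) / (tau j - tau i))).
Proof. induction k. destruct (Nat.ltb_spec j 0). lia. apply (IsPoly_const 0 1).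
 change (fun s => prodR (S k) (fun i => if Nat.eqb i j then 1 else (s - tau i) / (tau j - tau i)))
  with (fun s => prodR k (fun i => if Nat.eqb i j then 1 else (s - tau i) / (tau j - tau i)) *
   (if Nat.eqb k j then 1 else (s - tau k) / (tau j - tau k))).
 revert IHk; destruct (Nat.ltb_spec j k); destruct (Nat.ltb_spec j (S k)); try lia;
 destruct (Nat.eqb_spec k j); try lia; intro IHk.
 - replace (S k - 1)%nat with (S (k - 1)) by lia. unfold Rdiv. apply IsPoly_lin. auto.
 - subst j. replace (S k - 1)%nat with k by lia. apply IsPoly_ext with (fun s => prodR k (fun i => if Nat.eqb i k then 1 else (s - tau i) / (tau k - tau i))). intros; ring. auto.
 - unfold Rdiv. apply IsPoly_lin. auto.
Qed.

Lemma lagrange_poly : forall N tau j, (j <= N)%nat -> IsPoly N (lagrange N tau j).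
Proof. intros. unfold lagrange. pose proof (lagrange_poly_gen tau j (S N)).
 destruct (Nat.ltb_spec j (S N)); try lia. replace (S N - 1)%nat with N in H0 by lia. auto. Qed.

Lemma sum_lagrange_poly : forall N tau k, (k <= S N)%nat ->
  IsPoly N (fun s => sumR k (fun j => lagrange N tau j s)).
Proof. induction k; intros; simpl. apply IsPoly_const. apply IsPoly_plus. apply IHk; lia. apply lagrange_poly; lia. Qed.

Lemma sum_lagrange_one : forall N tau,
  (forall a b, (a <= N)%nat -> (b <= N)%nat -> a <> b -> tau a <> tau b) ->
  forall s, sumR (S N) (fun j => lagrange N tau j s) = 1.
Proof. intros. assert (forall s, sumR (S N) (fun j => lagrange N tau j s) - 1 = 0).
 apply (IsPoly_roots N _ tau). apply IsPoly_plus. apply sum_lagrange_poly; lia. apply IsPoly_const.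
 auto. intros. rewrite (sumR_ext _ _ (fun j => if Nat.eqb j i then 1 else 0)).
 rewrite sumR_single. destruct (Nat.ltb_spec i (S N)). ring. lia.
 intros; apply lagrange_node; auto; lia.
 specialize (H0 s); lra. Qed.

Lemma deriv_sumR : forall k (F : nat -> R -> R) (dF : nat -> R) x,
  (forall j, (j < k)%nat -> derivable_pt_lim (F j) x (dF j)) ->
  derivable_pt_lim (fun s => sumR k (fun j => F j s)) x (sumR k dF).
Proof. induction k; intros; simpl. apply derivable_pt_lim_const.
 apply (derivable_pt_lim_plus (fun s => sumR k (fun j => F j s)) (F k)).
 apply IHk; intros; apply H; lia. apply H; lia. Qed.

Lemma D_rowsum : forall N tau D, is_diff_matrix N tau D ->
  (forall a b, (a <= N)%nat -> (b <= N)%nat -> a <> b -> tau a <> tau b) ->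
  forall i, (1 <= i <= N)%nat -> sumR (S N) (fun j => D i j) = 0.
Proof. intros. assert (derivable_pt_lim (fun s => sumR (S N) (fun j => lagrange N tau j s)) (tau i) (sumR (S N) (fun j => D i j))).
 apply deriv_sumR. intros; apply H; auto; lia.
 assert ((fun s => sumR (S N) (fun j => lagrange N tau j s)) = fun _ => 1).
 apply functional_extensionality; intros; apply sum_lagrange_one; auto.
 rewrite H3 in H2. eapply uniqueness_limite. apply H2. apply derivable_pt_lim_const. Qed.

Definition symm (d : nat) (M : mat) : Prop := forall i j, (i < d)%nat -> (j < d)%nat -> M i j = M j i.
Definition PSD (d : nat) (M : mat) : Prop := forall v, 0 <= qform d d M v v.
Definition triv_ker (d : nat) (M : mat) : Prop :=
  forall v, (forall k, (k < d)%nat -> mv d M v k = 0) -> forall k, (k < d)%nat -> v k = 0.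

Lemma qform_ext : forall d1 d2 M M' a a' b b',
  (forall k l, (k < d1)%nat -> (l < d2)%nat -> a k * M k l * b l = a' k * M' k l * b' l) ->
  qform d1 d2 M a b = qform d1 d2 M' a' b'.
Proof. intros. unfold qform. apply sumR_ext; intros. apply sumR_ext; intros. auto. Qed.

Lemma dot_zero : forall d v, dot d v v = 0 -> forall k, (k < d)%nat -> v k = 0.
Proof. intros. pose proof (dot_ge_coord d v k H0). nra. Qed.

Lemma qform_zero_vec : forall d1 d2 M a b, (forall k, (k < d1)%nat -> a k = 0) -> qform d1 d2 M a b = 0.
Proof. intros. unfold qform. apply sumR_zero; intros. apply sumR_zero; intros. rewrite H; auto; ring. Qed.

Lemma qform_scal : forall d M v c, qform d d M (fun k => c * v k) (fun k => c * v k) = c * c * qform d d M v v.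
Proof. intros. unfold qform. rewrite <- sumR_scal. apply sumR_ext; intros. rewrite <- sumR_scal.
 apply sumR_ext; intros. ring. Qed.
Lemma dot_scal : forall d v c, dot d (fun k => c * v k) (fun k => c * v k) = c * c * dot d v v.
Proof. intros. unfold dot. rewrite <- sumR_scal. apply sumR_ext; intros. ring. Qed.

Lemma qform_shift : forall d M a v,
  qform d d (fun k l => M k l + (if Nat.eqb k l then a else 0)) v v = qform d d M v v + a * dot d v v.
Proof. intros. unfold qform, dot. rewrite <- sumR_scal, <- sumR_plus. apply sumR_ext; intros.
 rewrite (sumR_ext d _ (fun l => v i * M i l * v l + (if Nat.eqb l i then a * (v i * v i) else 0))).
 rewrite sumR_plus, sumR_single. destruct (Nat.ltb_spec i d); [ring|lia].
 intros. destruct (Nat.eqb_spec i i0); destruct (Nat.eqb_spec i0 i); try lia; subst; ring. Qed.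

Lemma mv_shift : forall d M a v k, (k < d)%nat ->
  mv d (fun k l => M k l + (if Nat.eqb k l then a else 0)) v k = mv d M v k + a * v k.
Proof. intros. unfold mv.
 rewrite (sumR_ext d _ (fun l => M k l * v l + (if Nat.eqb l k then a * v k else 0))).
 rewrite sumR_plus, sumR_single. destruct (Nat.ltb_spec k d); [ring|lia].
 intros. destruct (Nat.eqb_spec k i); destruct (Nat.eqb_spec i k); try lia; subst; ring. Qed.

Lemma qform_bound : forall d M v, Rabs (qform d d M v v) <=
  sumR d (fun k => sumR d (fun l => Rabs (M k l))) * dot d v v.
Proof. intros. unfold qform. eapply Rle_trans. apply sumR_abs. rewrite Rmult_comm, <- sumR_scal.
 apply sumR_le; intros. eapply Rle_trans. apply sumR_abs. rewrite <- sumR_scal. apply sumR_le; intros.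
 pose proof (enorm_ge_coord d v i H). pose proof (enorm_ge_coord d v i0 H0).
 assert (enorm d v * enorm d v = dot d v v). unfold enorm. apply sqrt_sqrt, dot_sq_nonneg.
 rewrite !Rabs_mult. rewrite <- H3.
 pose proof (Rabs_pos (v i)). pose proof (Rabs_pos (v i0)). pose proof (Rabs_pos (M i i0)).
 assert (Rabs (v i) * Rabs (v i0) <= enorm d v * enorm d v) by (apply Rmult_le_compat; auto).
 nra. Qed.

Definition schur (C : mat) : mat := fun k l => C (S k) (S l) - C (S k) O * C O (S l) / C O O.

Lemma qform_schur : forall d C v, symm (S d) C -> C O O <> 0 ->
  qform (S d) (S d) C v v =
  C O O * (v O + sumR d (fun l => C O (S l) * v (S l)) / C O O) ^ 2
  + qform d d (schur C) (fun k => v (S k)) (fun k => v (S k)).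
Proof. intros d C v Hs H0. unfold qform. rewrite sumR_shift.
 rewrite sumR_shift.
 rewrite (sumR_ext d (fun i => sumR (S d) (fun l => v (S i) * C (S i) l * v l))
   (fun i => v (S i) * C O (S i) * v O + sumR d (fun l => v (S i) * C (S i) (S l) * v (S l)))).
 2:{ intros. rewrite sumR_shift. rewrite (Hs (S i) O) by lia. reflexivity. }
 rewrite sumR_plus. unfold schur.
 rewrite (sumR_ext d (fun k => sumR d (fun l => v (S k) * (C (S k) (S l) - C (S k) O * C O (S l) / C O O) * v (S l)))
   (fun k => sumR d (fun l => v (S k) * C (S k) (S l) * v (S l)) + (- (v (S k) * C (S k) O / C O O)) * sumR d (fun l => C O (S l) * v (S l)))).
 2:{ intros. rewrite <- sumR_scal, <- sumR_plus. apply sumR_ext; intros. field. auto. }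
 rewrite sumR_plus.
 rewrite (sumR_ext d (fun k => - (v (S k) * C (S k) O / C O O) * sumR d (fun l => C O (S l) * v (S l)))
   (fun k => (- (sumR d (fun l => C O (S l) * v (S l))) / C O O) * (C O (S k) * v (S k)))).
 2:{ intros. rewrite (Hs (S i) O) by lia. field. auto. }
 rewrite sumR_scal.
 rewrite (sumR_ext d (fun i => v (S i) * C O (S i) * v O) (fun i => v O * (C O (S i) * v (S i)))) by (intros; ring).
 rewrite sumR_scal.
 rewrite (sumR_ext d (fun i => v O * C O (S i) * v (S i)) (fun i => v O * (C O (S i) * v (S i)))) by (intros; ring).
 rewrite sumR_scal. field. auto. Qed.

Lemma mv_schur : forall d C v k, symm (S d) C -> C O O <> 0 -> (k < d)%nat ->
  mv d (schur C) (fun k => v (S k)) k =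
  mv (S d) C (fun j => if Nat.eqb j O then - (sumR d (fun l => C O (S l) * v (S l))) / C O O else v j) (S k).
Proof. intros. unfold mv, schur. rewrite sumR_shift. simpl.
 rewrite (sumR_ext d (fun l => (C (S k) (S l) - C (S k) O * C O (S l) / C O O) * v (S l))
   (fun l => C (S k) (S l) * v (S l) + (- (C (S k) O / C O O)) * (C O (S l) * v (S l)))).
 2:{ intros. field; auto. }
 rewrite sumR_plus, sumR_scal. field. auto. Qed.

Lemma qform_plusl : forall d1 d2 M a a' b, qform d1 d2 M (fun k => a k + a' k) b = qform d1 d2 M a b + qform d1 d2 M a' b.
Proof. intros. unfold qform. rewrite <- sumR_plus. apply sumR_ext; intros. rewrite <- sumR_plus. apply sumR_ext; intros. ring. Qed.
Lemma qform_plusr : forall d1 d2 M a b b', qform d1 d2 M a (fun k => b k + b' k) = qform d1 d2 M a b + qform d1 d2 M a b'.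
Proof. intros. unfold qform. rewrite <- sumR_plus. apply sumR_ext; intros. rewrite <- sumR_plus. apply sumR_ext; intros. ring. Qed.

Definition ind (p : nat) (a : R) : vec := fun k => if Nat.eqb k p then a else 0.

Lemma qform_ind : forall d1 d2 M p q a b, (p < d1)%nat -> (q < d2)%nat ->
  qform d1 d2 M (ind p a) (ind q b) = a * M p q * b.
Proof. intros. unfold qform.
 rewrite (sumR_ext d1 _ (fun k => if Nat.eqb k p then a * M p q * b else 0)).
 rewrite sumR_single. destruct (Nat.ltb_spec p d1); [auto|lia].
 intros. rewrite (sumR_ext d2 _ (fun l => if Nat.eqb l q then ind p a i * M i q * b else 0)).
 rewrite sumR_single. destruct (Nat.ltb_spec q d2); try lia. unfold ind.
 destruct (Nat.eqb_spec i p); subst; ring.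
 intros. unfold ind at 2. destruct (Nat.eqb_spec i0 q); subst; ring. Qed.

Lemma PSD_diag : forall d C p, PSD d C -> (p < d)%nat -> 0 <= C p p.
Proof. intros. specialize (H (ind p 1)). rewrite qform_ind in H; auto. lra. Qed.

Lemma PSD_two : forall d C p q s, PSD d C -> (p < d)%nat -> (q < d)%nat ->
  0 <= s * s * C p p + s * C p q + s * C q p + C q q.
Proof. intros. specialize (H (fun k => ind p s k + ind q 1 k)).
 rewrite qform_plusl, !qform_plusr, !qform_ind in H; auto. lra. Qed.

Lemma schur_pos : forall d C, symm (S d) C -> PSD (S d) C -> triv_ker (S d) C -> 0 < C O O.
Proof. intros d C Hs Hp Hk. destruct (PSD_diag (S d) C O Hp ltac:(lia)); auto. exfalso.
 assert (Hz : forall l, (l < S d)%nat -> C O l = 0).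
 { intros. destruct (Nat.eq_dec l O). subst; auto.
   destruct (Req_dec (C O l) 0); auto. exfalso.
   set (s := - (C l l + 1) / (2 * C O l)).
   pose proof (PSD_two (S d) C O l s Hp ltac:(lia) H0).
   rewrite <- H in H2. rewrite <- (Hs O l) in H2 by lia.
   assert (s * C O l = - (C l l + 1) / 2) by (unfold s; field; auto).
   lra. }
 assert (ind O 1 O = 0). apply Hk; [|lia]. intros. unfold mv.
 rewrite (sumR_ext (S d) _ (fun l => if Nat.eqb l O then C k O else 0)).
 rewrite sumR_single. simpl. rewrite Hs by lia. apply Hz; lia.
 intros. unfold ind. destruct (Nat.eqb_spec i O); subst; ring.
 unfold ind in H0. simpl in H0. lra. Qed.

Lemma coord_bound_sum : forall d a v, Rabs (sumR d (fun l => a l * v l)) <=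
  sumR d (fun l => Rabs (a l)) * enorm d v.
Proof. intros. eapply Rle_trans. apply sumR_abs. rewrite Rmult_comm, <- sumR_scal. apply sumR_le; intros.
 rewrite Rabs_mult. rewrite Rmult_comm. apply Rmult_le_compat_r. apply Rabs_pos. apply enorm_ge_coord; auto. Qed.

Lemma enorm_sq : forall d v, enorm d v * enorm d v = dot d v v.
Proof. intros. unfold enorm. apply sqrt_sqrt, dot_sq_nonneg. Qed.

Lemma dot_shift : forall d v, dot (S d) v v = v O * v O + dot d (fun k => v (S k)) (fun k => v (S k)).
Proof. intros. unfold dot. rewrite sumR_shift. auto. Qed.

Lemma PD_of_PSD_ker : forall d C, symm d C -> PSD d C -> triv_ker d C ->
  exists delta, 0 < delta /\ forall v, delta * dot d v v <= qform d d C v v.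
Proof. induction d; intros C Hs Hp Hk.
 exists 1. split. lra. intros. unfold dot, qform; simpl. lra.
 pose proof (schur_pos d C Hs Hp Hk) as Hc.
 assert (Hsym : symm d (schur C)).
 { intros i j Hi Hj. unfold schur. rewrite (Hs (S i) (S j)), (Hs (S i) O), (Hs O (S j)) by lia. field. lra. }
 assert (Hps : PSD d (schur C)).
 { intros v'. pose proof (Hp (fun j => match j with O => - (sumR d (fun l => C O (S l) * v' l)) / C O O | S j' => v' j' end)).
   rewrite qform_schur in H; auto; [|lra]. simpl in H.
   set (p := sumR d (fun l => C O (S l) * v' l)) in H.
   assert (E0 : - p / C O O + p / C O O = 0) by (unfold Rdiv; ring). rewrite E0 in H.
   assert (E1 : qform d d (schur C) (fun k => v' k) (fun k => v' k) = qform d d (schur C) v' v') by reflexivity. lra. }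
 assert (Hks : triv_ker d (schur C)).
 { intros v' Hv k Hkd. set (v := fun j => match j with O => - (sumR d (fun l => C O (S l) * v' l)) / C O O | S j' => v' j' end).
   assert (forall k, (k < S d)%nat -> mv (S d) C v k = 0).
   { intros. destruct k0.
     - unfold mv. rewrite sumR_shift. unfold v; simpl.
       field. lra.
     - rewrite <- (Hv k0 ltac:(lia)).
       change (mv d (schur C) v' k0) with (mv d (schur C) (fun k => v (S k)) k0).
       rewrite mv_schur; auto; try lia; try lra.
       unfold mv. apply sumR_ext; intros. destruct i; reflexivity. }
   specialize (Hk v H (S k) ltac:(lia)). unfold v in Hk. simpl in Hk. auto. }
 destruct (IHd (schur C) Hsym Hps Hks) as [dl [Hdl Hb]].
 set (A := sumR d (fun l => Rabs (C O (S l)))).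
 assert (HA : 0 <= A) by (apply sumR_nonneg; intros; apply Rabs_pos).
 set (K := 1 + 2 * (A / C O O) * (A / C O O)).
 assert (HK : 1 <= K). { unfold K. assert (0 <= (A / C O O) * (A / C O O)) by nra. lra. }
 exists (Rmin (C O O / 2) (dl / K)). split. apply Rmin_pos. lra. apply Rdiv_lt_0_compat; lra.
 intros v. rewrite qform_schur; auto; [|lra]. rewrite dot_shift.
 set (v' := fun k => v (S k)). fold v' in Hb.
 set (p := sumR d (fun l => C O (S l) * v' l)).
 set (w := v O + p / C O O).
 assert (Hp2 : p * p <= A * A * dot d v' v').
 { pose proof (coord_bound_sum d (fun l => C O (S l)) v') as H. cbv beta in H. fold p A in H.
   pose proof (enorm_nonneg d v'). pose proof (Rabs_pos p).
   assert (Rabs p * Rabs p <= (A * enorm d v') * (A * enorm d v')) by (apply Rmult_le_compat; auto).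
   replace (p * p) with (Rabs p * Rabs p) by (rewrite <- Rabs_mult; apply Rabs_right; nra).
   rewrite <- enorm_sq. nra. }
 assert (Hv0 : v O * v O <= 2 * (w * w) + 2 * (A / C O O) * (A / C O O) * dot d v' v').
 { replace (v O) with (w - p / C O O) by (unfold w; ring).
   assert (p / C O O * (p / C O O) <= A / C O O * (A / C O O) * dot d v' v').
   { replace (p / C O O * (p / C O O)) with (p * p / (C O O * C O O)) by (field; lra).
     replace (A / C O O * (A / C O O) * dot d v' v') with (A * A * dot d v' v' / (C O O * C O O)) by (field; lra).
     apply Rmult_le_compat_r. left. apply Rinv_0_lt_compat. nra. auto. }
   set (q := p / C O O) in *. pose proof (Rle_0_sqr (w + q)). unfold Rsqr in *. nra. }
 specialize (Hb v'). pose proof (dot_sq_nonneg d v').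
 pose proof (Rmin_l (C O O / 2) (dl / K)). pose proof (Rmin_r (C O O / 2) (dl / K)).
 set (de := Rmin (C O O / 2) (dl / K)) in *.
 assert (de * K <= dl). { apply Rmult_le_reg_r with (/ K). apply Rinv_0_lt_compat; lra.
   replace (de * K * / K) with de by (field; lra). auto. }
 assert (0 < de) by (apply Rmin_pos; [lra | apply Rdiv_lt_0_compat; lra]).
 fold w. unfold Rpow_def.pow. rewrite Rmult_1_r.
 assert (de * (v O * v O) <= de * (2 * (w * w)) + de * (2 * (A / C O O) * (A / C O O)) * dot d v' v').
 { rewrite <- Rmult_assoc. nra. }
 assert (de * (2 * (w * w)) <= C O O * (w * w)) by nra.
 assert (de * dot d v' v' + de * (2 * (A / C O O) * (A / C O O)) * dot d v' v' = de * K * dot d v' v') by (unfold K; ring).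
 assert (de * K * dot d v' v' <= dl * dot d v' v') by nra.
 change (sumR d (fun l => C O (S l) * v (S l))) with p. fold w. lra. Qed.

Lemma PD_eigen : forall d M alpha, symm d M -> smallest_eigenvalue_gt d M alpha ->
  forall v, alpha * dot d v v <= qform d d M v v.
Proof. intros d M alpha Hs He.
 set (B := fun k l => M k l + (if Nat.eqb k l then - alpha else 0)).
 assert (HB : forall v, qform d d B v v = qform d d M v v - alpha * dot d v v).
 { intros. unfold B. rewrite qform_shift. ring. }
 assert (HBs : symm d B). { intros i j Hi Hj. unfold B. rewrite Hs by auto.
   destruct (Nat.eqb_spec i j); destruct (Nat.eqb_spec j i); try lia; auto. }
 assert (Hdz : forall v, dot d v v <= 0 -> forall N : mat, qform d d N v v = 0).
 { intros. apply qform_zero_vec. apply dot_zero. pose proof (dot_sq_nonneg d v). lra. }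
 enough (forall v, 0 <= qform d d B v v) by (intros v; specialize (H v); rewrite HB in H; lra).
 intros v0. destruct (Rle_lt_dec 0 (qform d d B v0 v0)) as [|Hneg]; auto. exfalso.
 assert (Hd0 : 0 < dot d v0 v0). { destruct (Rle_lt_dec (dot d v0 v0) 0); auto. rewrite (Hdz v0 r B) in Hneg. lra. }
 set (E := fun t => exists v, 0 < dot d v v /\ t * dot d v v = - qform d d B v v).
 set (KB := sumR d (fun k => sumR d (fun l => Rabs (B k l)))).
 assert (Hbd : bound E).
 { exists KB. intros t [v [Hv Ht]]. pose proof (qform_bound d B v). fold KB in H.
   apply Rmult_le_reg_r with (dot d v v); auto. rewrite Ht. pose proof (Rabs_Ropp (qform d d B v v)); pose proof (RRle_abs (- qform d d B v v)). lra. }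
 assert (Ev : E (- qform d d B v0 v0 / dot d v0 v0)) by (exists v0; split; auto; field; lra).
 assert (Hne : exists t, E t) by (eexists; apply Ev).
 destruct (completeness E Hbd Hne) as [t0 [Hub Hlub]].
 assert (Ht0 : 0 < t0). { pose proof (Hub _ Ev). assert (0 < - qform d d B v0 v0 / dot d v0 v0) by (apply Rdiv_lt_0_compat; lra). lra. }
 set (Cm := fun k l => B k l + (if Nat.eqb k l then t0 else 0)).
 assert (HC : forall v, qform d d Cm v v = qform d d B v v + t0 * dot d v v) by (intros; apply qform_shift).
 assert (HCs : symm d Cm). { intros i j Hi Hj. unfold Cm. rewrite HBs by auto.
   destruct (Nat.eqb_spec i j); destruct (Nat.eqb_spec j i); try lia; auto. }
 assert (HCp : PSD d Cm).
 { intros v. rewrite HC. destruct (Rle_lt_dec (dot d v v) 0).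
   rewrite (Hdz v r B). pose proof (dot_sq_nonneg d v). nra.
   assert (- qform d d B v v / dot d v v <= t0). { apply Hub. exists v. split; auto. field. lra. }
   apply Rmult_le_compat_r with (r := dot d v v) in H; [|lra].
   replace (- qform d d B v v / dot d v v * dot d v v) with (- qform d d B v v) in H by (field; lra). lra. }
 assert (HCk : triv_ker d Cm).
 { intros v Hv k Hk. destruct (Req_dec (v k) 0); auto. exfalso.
   assert (alpha < alpha - t0). apply He. exists v. split. exists k; auto.
   intros k' Hk'. specialize (Hv k' Hk'). unfold Cm in Hv. rewrite mv_shift in Hv by auto.
   unfold B in Hv. rewrite mv_shift in Hv by auto. lra. lra. }
 destruct (PD_of_PSD_ker d Cm HCs HCp HCk) as [de [Hde Hq]].
 assert (t0 <= t0 - de). { apply Hlub. intros t [v [Hv Ht]]. specialize (Hq v). rewrite HC in Hq.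
   apply Rmult_le_reg_r with (dot d v v); auto. rewrite Ht. lra. }
 lra. Qed.

Lemma mvt_diff : forall (F Fd : R -> R -> R) t1 t2 a h, 0 < h ->
  (forall s, a <= s <= a + h -> derivable_pt_lim (fun s' => F s' t1) s (Fd s t1) /\
                                derivable_pt_lim (fun s' => F s' t2) s (Fd s t2)) ->
  exists c, a < c < a + h /\ (F (a + h) t2 - F (a + h) t1) - (F a t2 - F a t1) = (Fd c t2 - Fd c t1) * h.
Proof. intros. destruct (MVT_cor2 (fun s => F s t2 - F s t1) (fun s => Fd s t2 - Fd s t1) a (a + h)) as [c [Hc1 Hc2]].
 lra. intros. destruct (H0 c H1). apply (derivable_pt_lim_minus (fun s' => F s' t2) (fun s' => F s' t1)); auto.
 exists c. split; auto. rewrite Hc1. ring. Qed.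

Lemma mvt1 : forall (f f' : R -> R) a h, 0 < h ->
  (forall s, a <= s <= a + h -> derivable_pt_lim f s (f' s)) ->
  exists c, a < c < a + h /\ f (a + h) - f a = f' c * h.
Proof. intros. destruct (MVT_cor2 f f' a (a + h)) as [c [Hc1 Hc2]]. lra. auto.
 exists c. split; auto. rewrite Hc1. ring. Qed.

Lemma schwarz2D : forall (F Fa Fb Fab Fba : R -> R -> R) a b r, 0 < r ->
 (forall s t, Rabs (s - a) < r -> Rabs (t - b) < r ->
   derivable_pt_lim (fun s' => F s' t) s (Fa s t) /\
   derivable_pt_lim (fun t' => F s t') t (Fb s t) /\
   derivable_pt_lim (fun t' => Fa s t') t (Fab s t) /\
   derivable_pt_lim (fun s' => Fb s' t) s (Fba s t)) ->
 (forall eps, 0 < eps -> exists del, 0 < del /\ forall s t, Rabs (s - a) < del -> Rabs (t - b) < del ->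
    Rabs (Fab s t - Fab a b) < eps /\ Rabs (Fba s t - Fba a b) < eps) ->
 Fab a b = Fba a b.
Proof. intros F Fa Fb Fab Fba a b r Hr Hd Hc.
 destruct (Req_dec (Fab a b - Fba a b) 0). lra. exfalso.
 set (eps := Rabs (Fab a b - Fba a b) / 4).
 assert (He : 0 < eps) by (unfold eps; apply Rdiv_lt_0_compat; [apply Rabs_pos_lt; auto| lra]).
 destruct (Hc eps He) as [del [Hdel Hcd]].
 set (h := Rmin del r / 2).
 assert (Hh : 0 < h) by (unfold h; apply Rdiv_lt_0_compat; [apply Rmin_pos; auto | lra]).
 assert (Hhd : h < del) by (unfold h; pose proof (Rmin_l del r); lra).
 assert (Hhr : h < r) by (unfold h; pose proof (Rmin_r del r); lra).
 assert (Hin : forall s, a <= s <= a + h -> Rabs (s - a) < r /\ Rabs (s - a) < del).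
 { intros. rewrite Rabs_right by lra. lra. }
 assert (Hin2 : forall t, b <= t <= b + h -> Rabs (t - b) < r /\ Rabs (t - b) < del).
 { intros. rewrite Rabs_right by lra. lra. }
 destruct (mvt_diff F Fa b (b + h) a h Hh) as [xi [Hxi E1]].
 { intros. destruct (Hin s H0).
   assert (Rabs (b - b) < r) by (replace (b - b) with 0 by ring; rewrite Rabs_R0; lra).
   assert (Rabs (b + h - b) < r) by (rewrite Rabs_right; lra).
   split; [eapply proj1; apply (Hd s b); auto | eapply proj1; apply (Hd s (b + h)); auto]; auto. }
 destruct (mvt1 (fun t => Fa xi t) (fun t => Fab xi t) b h Hh) as [eta [Heta E2]].
 { intros. eapply proj1, proj2, proj2. apply (Hd xi s). destruct (Hin xi); lra. destruct (Hin2 s); auto. }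
 destruct (mvt_diff (fun t s => F s t) (fun t s => Fb s t) a (a + h) b h Hh) as [eta' [Heta' E3]].
 { intros. destruct (Hin2 s H0).
   assert (Rabs (a - a) < r) by (replace (a - a) with 0 by ring; rewrite Rabs_R0; lra).
   assert (Rabs (a + h - a) < r) by (rewrite Rabs_right; lra).
   split; [eapply proj1, proj2; apply (Hd a s); auto | eapply proj1, proj2; apply (Hd (a + h) s); auto]. }
 destruct (mvt1 (fun s => Fb s eta') (fun s => Fba s eta') a h Hh) as [xi' [Hxi' E4]].
 { intros. eapply proj2, proj2, proj2. apply (Hd s eta'). destruct (Hin s); auto. destruct (Hin2 eta'); lra. }
 simpl in E3. rewrite E2 in E1. rewrite E4 in E3.
 assert (Fab xi eta = Fba xi' eta').
 { apply Rmult_eq_reg_r with (h * h). 2: nra. replace (Fab xi eta * (h * h)) with (Fab xi eta * h * h) by ring.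
   rewrite <- E1. replace (Fba xi' eta' * (h * h)) with (Fba xi' eta' * h * h) by ring. rewrite <- E3. ring. }
 destruct (Hcd xi eta) as [A1 _]. destruct (Hin xi); lra. destruct (Hin2 eta); lra.
 destruct (Hcd xi' eta') as [_ A2]. destruct (Hin xi'); lra. destruct (Hin2 eta'); lra.
 rewrite H0 in A1.
 assert (Rabs (Fab a b - Fba a b) <= Rabs (Fba xi' eta' - Fab a b) + Rabs (Fba xi' eta' - Fba a b)).
 { replace (Fab a b - Fba a b) with (- (Fba xi' eta' - Fab a b) + (Fba xi' eta' - Fba a b)) by ring.
   eapply Rle_trans. apply Rabs_triang. rewrite Rabs_Ropp. lra. }
 unfold eps in *. lra. Qed.

Lemma upd_eq : forall v i s, upd v i s i = s.
Proof. intros. unfold upd. rewrite Nat.eqb_refl. auto. Qed.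
Lemma upd_neq : forall v i s k, k <> i -> upd v i s k = v k.
Proof. intros. unfold upd. destruct (Nat.eqb_spec k i); auto; lia. Qed.
Lemma upd_upd : forall v i s s', upd (upd v i s) i s' = upd v i s'.
Proof. intros. apply functional_extensionality; intros k. unfold upd. destruct (Nat.eqb_spec k i); auto. Qed.
Lemma upd_comm : forall v i j s t, i <> j -> upd (upd v i s) j t = upd (upd v j t) i s.
Proof. intros. apply functional_extensionality; intros k. unfold upd.
 destruct (Nat.eqb_spec k i); destruct (Nat.eqb_spec k j); auto; lia. Qed.
Lemma upd_same : forall v i, upd v i (v i) = v.
Proof. intros. apply functional_extensionality; intros k. unfold upd. destruct (Nat.eqb_spec k i); subst; auto. Qed.

Definition zup (n : nat) (p : vec * vec) (i : nat) (s : R) : vec * vec := zupd n (fst p) (snd p) i s.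
Definition zc (n : nat) (p : vec * vec) (i : nat) : R := zcoord n (fst p) (snd p) i.

Lemma zc_zup : forall n p i s c, zc n (zup n p i s) c = if Nat.eqb c i then s else zc n p c.
Proof. intros. unfold zc, zup, zupd, zcoord. destruct p as [x u]; simpl.
 destruct (Nat.ltb_spec i n); destruct (Nat.ltb_spec c n); simpl; destruct (Nat.eqb_spec c i); try lia; try reflexivity.
 - subst. apply upd_eq.
 - apply upd_neq; auto.
 - subst. apply upd_eq.
 - apply upd_neq; lia.
Qed.

Lemma zup_zup : forall n p i s s', zup n (zup n p i s) i s' = zup n p i s'.
Proof. intros. destruct p as [x u]. unfold zup, zupd; simpl. destruct (Nat.ltb i n); simpl; rewrite upd_upd; auto. Qed.

Lemma zup_comm : forall n p i j s t, i <> j -> zup n (zup n p i s) j t = zup n (zup n p j t) i s.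
Proof. intros. destruct p as [x u]. unfold zup, zupd; simpl.
 destruct (Nat.ltb_spec i n); destruct (Nat.ltb_spec j n); simpl; try rewrite upd_comm; auto; lia. Qed.

Lemma zup_same : forall n p i, zup n p i (zc n p i) = p.
Proof. intros. destruct p as [x u]. unfold zup, zupd, zc, zcoord; simpl. destruct (Nat.ltb i n); rewrite upd_same; auto. Qed.

Lemma dist2_zc : forall n m x u x' u', dist2 n m x' u' x u =
  sqrt (sumR (n + m) (fun c => (zc n (x', u') c - zc n (x, u) c) * (zc n (x', u') c - zc n (x, u) c))).
Proof. intros. unfold dist2. f_equal. rewrite sumR_split. unfold dot, vsub, zc, zcoord; simpl. f_equal.
 apply sumR_ext; intros. destruct (Nat.ltb_spec i n); auto; lia.
 apply sumR_ext; intros. destruct (Nat.ltb_spec (n + i) n); try lia. replace (n + i - n)%nat with i by lia. auto. Qed.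

Lemma dist2_zup2 : forall n m p i j s t, i <> j ->
  dist2 n m (fst (zup n (zup n p i s) j t)) (snd (zup n (zup n p i s) j t)) (fst p) (snd p)
  <= Rabs (s - zc n p i) + Rabs (t - zc n p j).
Proof. intros. rewrite dist2_zc. destruct p as [x u]. simpl. rewrite <- surjective_pairing.
 set (P := zup n (zup n (x, u) i s) j t).
 rewrite <- (sqrt_Rsqr (Rabs (s - zc n (x, u) i) + Rabs (t - zc n (x, u) j))) by (pose proof (Rabs_pos (s - zc n (x,u) i)); pose proof (Rabs_pos (t - zc n (x,u) j)); lra).
 apply sqrt_le_1_alt.
 apply Rle_trans with (sumR (n + m) (fun c => (if Nat.eqb c i then (s - zc n (x,u) i) * (s - zc n (x,u) i) else 0)
     + (if Nat.eqb c j then (t - zc n (x,u) j) * (t - zc n (x,u) j) else 0))).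
 apply sumR_le; intros. unfold P. rewrite !zc_zup.
 destruct (Nat.eqb_spec i0 j); destruct (Nat.eqb_spec i0 i); subst; try lia; nra.
 rewrite sumR_plus, !sumR_single.
 unfold Rsqr. pose proof (Rabs_pos (s - zc n (x,u) i)). pose proof (Rabs_pos (t - zc n (x,u) j)).
 set (A := s - zc n (x,u) i) in *. set (B := t - zc n (x,u) j) in *.
 assert (E1 : A * A = Rabs A * Rabs A). rewrite <- Rabs_mult. symmetry. apply Rabs_pos_eq. nra.
 assert (E2 : B * B = Rabs B * Rabs B). rewrite <- Rabs_mult. symmetry. apply Rabs_pos_eq. nra.
 destruct (Nat.ltb i (n+m)); destruct (Nat.ltb j (n+m)); nra. Qed.

Lemma schwarz_pair : forall n m (G : vec -> vec -> R) (DG : vec -> vec -> nat -> R)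
  (D2G : vec -> vec -> nat -> nat -> R) (O : vec -> vec -> Prop) x u i j,
  open2 n m O -> O x u -> (i < n + m)%nat -> (j < n + m)%nat ->
  (forall x' u', O x' u' -> forall i, (i < n + m)%nat ->
     has_partial2 n G x' u' i (DG x' u' i) /\
     forall j, (j < n + m)%nat ->
       has_partial2 n (fun x u => DG x u i) x' u' j (D2G x' u' i j) /\
       cont2 n m (fun x u => D2G x u i j) x' u') ->
  D2G x u i j = D2G x u j i.
Proof. intros n m G DG D2G O x u i j HO Hxu Hi Hj H.
 destruct (Nat.eq_dec i j) as [|Hij]; [subst; auto|].
 set (p := (x, u)). set (a := zc n p i). set (b := zc n p j).
 set (P := fun s t => zup n (zup n p i s) j t).
 assert (HPi : forall s t s', zup n (P s t) i s' = P s' t).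
 { intros. unfold P. rewrite zup_comm by auto. rewrite zup_zup. auto. }
 assert (HPj : forall s t t', zup n (P s t) j t' = P s t').
 { intros. unfold P. rewrite zup_zup. auto. }
 assert (Hci : forall s t, zc n (P s t) i = s).
 { intros. unfold P. rewrite !zc_zup. destruct (Nat.eqb_spec i j); try lia. rewrite Nat.eqb_refl. auto. }
 assert (Hcj : forall s t, zc n (P s t) j = t).
 { intros. unfold P. rewrite zc_zup, Nat.eqb_refl. auto. }
 assert (HPab : P a b = p). { unfold P, a, b. rewrite zup_same. rewrite zup_same. auto. }
 assert (Hdist : forall s t, dist2 n m (fst (P s t)) (snd (P s t)) x u <= Rabs (s - a) + Rabs (t - b)).
 { intros. apply (dist2_zup2 n m p i j s t Hij). }
 destruct (HO x u Hxu) as [r [Hr Hro]].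
 assert (HOst : forall s t, Rabs (s - a) < r / 2 -> Rabs (t - b) < r / 2 -> O (fst (P s t)) (snd (P s t))).
 { intros. apply Hro. specialize (Hdist s t). lra. }
 set (F := fun s t => G (fst (P s t)) (snd (P s t))).
 set (Fa := fun s t => DG (fst (P s t)) (snd (P s t)) i).
 set (Fb := fun s t => DG (fst (P s t)) (snd (P s t)) j).
 set (Fab := fun s t => D2G (fst (P s t)) (snd (P s t)) i j).
 set (Fba := fun s t => D2G (fst (P s t)) (snd (P s t)) j i).
 assert (E1 : Fab a b = D2G x u i j) by (unfold Fab; rewrite HPab; auto).
 assert (E2 : Fba a b = D2G x u j i) by (unfold Fba; rewrite HPab; auto).
 rewrite <- E1, <- E2.
 apply (schwarz2D F Fa Fb Fab Fba a b (r / 2)). lra.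
 - intros s t Hs Ht. pose proof (HOst s t Hs Ht) as Ho. set (q := P s t) in *.
   destruct (H (fst q) (snd q) Ho i Hi) as [D1 D1']. destruct (D1' j Hj) as [D3 _].
   destruct (H (fst q) (snd q) Ho j Hj) as [D2 D2']. destruct (D2' i Hi) as [D4 _].
   unfold has_partial2 in D1, D2, D3, D4.
   change (zupd n (fst q) (snd q)) with (zup n q) in D1, D2, D3, D4.
   change (zcoord n (fst q) (snd q)) with (zc n q) in D1, D2, D3, D4.
   unfold q in D1, D2, D3, D4. rewrite Hci in D1, D4. rewrite Hcj in D2, D3.
   assert (EF1 : (fun s' => G (fst (zup n (P s t) i s')) (snd (zup n (P s t) i s'))) = (fun s' => F s' t))
     by (apply functional_extensionality; intro; rewrite HPi; reflexivity).
   assert (EF4 : (fun s' => DG (fst (zup n (P s t) i s')) (snd (zup n (P s t) i s')) j) = (fun s' => Fb s' t))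
     by (apply functional_extensionality; intro; rewrite HPi; reflexivity).
   assert (EF2 : (fun t' => G (fst (zup n (P s t) j t')) (snd (zup n (P s t) j t'))) = (fun t' => F s t'))
     by (apply functional_extensionality; intro; rewrite HPj; reflexivity).
   assert (EF3 : (fun t' => DG (fst (zup n (P s t) j t')) (snd (zup n (P s t) j t')) i) = (fun t' => Fa s t'))
     by (apply functional_extensionality; intro; rewrite HPj; reflexivity).
   rewrite EF1 in D1. rewrite EF2 in D2. rewrite EF3 in D3. rewrite EF4 in D4.
   repeat split; auto.
 - intros eps Heps.
   destruct (H x u Hxu i Hi) as [_ C1]. destruct (C1 j Hj) as [_ C1'].
   destruct (H x u Hxu j Hj) as [_ C2]. destruct (C2 i Hi) as [_ C2'].
   destruct (C1' eps Heps) as [d1 [Hd1 Hc1]]. destruct (C2' eps Heps) as [d2 [Hd2 Hc2]].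
   exists (Rmin d1 d2 / 2). split. apply Rdiv_lt_0_compat; [apply Rmin_pos; auto|lra].
   intros s t Hs Ht. pose proof (Hdist s t). pose proof (Rmin_l d1 d2). pose proof (Rmin_r d1 d2).
   unfold Fab, Fba. rewrite HPab. simpl. split; [apply Hc1 | apply Hc2]; lra.
Qed.


Lemma Hess_symm : forall n m f Df D2f xs us ls,
  f_C2_near_traj n m f Df D2f xs us ->
  forall t, -1 <= t <= 1 -> symm (n + m) (HessH n D2f xs us ls t).
Proof. intros n m f Df D2f xs us ls [O [HO [Hin Hf]]] t Ht i j Hi Hj.
 unfold HessH. apply sumR_ext; intros k Hk. f_equal.
 apply (schwarz_pair n m (fun x u => f x u k) (Df k) (D2f k) O); auto.
 intros x' u' Ho i' Hi'. destruct (Hf x' u' Ho k Hk) as [_ H2]. destruct (H2 i' Hi') as [A1 [_ A3]].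
 split; auto. Qed.

Lemma dist2_0 : forall n x u x' u', dist2 n 0 x u x' u' = dist1 n x x'.
Proof. intros. unfold dist2, dist1, enorm. unfold dot at 2. simpl. rewrite Rplus_0_r. auto. Qed.

Lemma partial_0 : forall n (C : vec -> R) x u i dv, (i < n)%nat ->
  has_partial1 C x i dv -> has_partial2 n (fun x u => C x) x u i dv.
Proof. intros. unfold has_partial2, has_partial1, zupd, zcoord in *.
 destruct (Nat.ltb_spec i n); [|lia]. simpl. auto. Qed.

Lemma C_symm : forall n C DC D2C x0, C_C2_near n C DC D2C x0 -> symm n (D2C x0).
Proof. intros n C DC D2C x0 [O [HO [Hx0 HC]]] i j Hi Hj.
 apply (schwarz_pair n 0 (fun x u => C x) (fun x u i => DC x i) (fun x u i j => D2C x i j) (fun x u => O x) x0 (fun _ => 0)); try lia; auto.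
 - intros x u Hxu. destruct (HO x Hxu) as [r [Hr Hro]]. exists r. split; auto.
   intros. apply Hro. rewrite <- (dist2_0 n x' u' x u). auto.
 - intros x' u' Ho i' Hi'. destruct (HC x' Ho) as [_ H2]. destruct (H2 i' ltac:(lia)) as [A1 [_ A3]].
   split. apply partial_0; auto; lia.
   intros j' Hj'. destruct (A3 j' ltac:(lia)) as [B1 B2]. split. apply (partial_0 n (fun x => DC x i')); auto; lia.
   intros eps Heps. destruct (B2 eps Heps) as [del [Hd Hc]]. exists del. split; auto.
   intros. apply Hc. rewrite <- (dist2_0 n x'0 u'0 x' u'). auto. Qed.

Definition clamp (t : R) : R := Rmax (-1) (Rmin t 1).
Lemma clamp_in : forall t, -1 <= clamp t <= 1.
Proof. intros. unfold clamp. split. apply Rmax_l. apply Rmax_lub. lra. apply Rmin_r. Qed.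
Lemma clamp_id : forall t, -1 <= t <= 1 -> clamp t = t.
Proof. intros. unfold clamp. rewrite Rmin_left by lra. rewrite Rmax_right; lra. Qed.
Lemma clamp_lip : forall t c, Rabs (clamp t - clamp c) <= Rabs (t - c).
Proof. intros. unfold clamp. unfold Rmax, Rmin.
 destruct (Rle_dec t 1); destruct (Rle_dec c 1); destruct (Rle_dec (-1) t); destruct (Rle_dec (-1) c);
 destruct (Rle_dec (-1) 1); try lra;
 repeat match goal with |- context [Rabs ?x] => destruct (Rcase_abs x) as [?|?];
   [rewrite (Rabs_left x) by lra | rewrite (Rabs_right x) by lra] end; lra. Qed.

Lemma cpt_intro : forall (g : R -> R) c,
  (forall eps, 0 < eps -> exists del, 0 < del /\ forall t, Rabs (t - c) < del -> Rabs (g t - g c) < eps) ->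
  continuity_pt g c.
Proof. intros g c H eps Heps. destruct (H eps Heps) as [del [Hd Ht]]. exists del. split. lra.
 intros x [_ Hx]. simpl. unfold R_dist. apply Ht. apply Hx. Qed.

Lemma cpt_sumR : forall k (F : nat -> R -> R) c, (forall j, (j < k)%nat -> continuity_pt (F j) c) ->
  continuity_pt (fun t => sumR k (fun j => F j t)) c.
Proof. induction k; intros; simpl. apply continuity_pt_const. intros x y; auto.
 apply (continuity_pt_plus (fun t => sumR k (fun j => F j t)) (F k)). apply IHk; intros; apply H; lia. apply H; lia. Qed.

Lemma bound_ab : forall (h : R -> R), (forall c, continuity_pt h c) ->
  exists K, forall t, -1 <= t <= 1 -> Rabs (h t) <= K.
Proof. intros. destruct (continuity_ab_maj h (-1) 1) as [M1 [H1 _]]. lra. auto.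
 destruct (continuity_ab_maj (fun t => - h t) (-1) 1) as [M2 [H2 _]]. lra.
 intros. apply (continuity_pt_opp h). auto.
 exists (Rmax (h M1) (- h M2)). intros. specialize (H1 t H0). specialize (H2 t H0).
 unfold Rabs. destruct (Rcase_abs (h t)). pose proof (Rmax_r (h M1) (- h M2)). lra.
 pose proof (Rmax_l (h M1) (- h M2)). lra. Qed.

Lemma fin_bound : forall d (Q : nat -> R -> Prop),
  (forall i K K', Q i K -> K <= K' -> Q i K') ->
  (forall i, (i < d)%nat -> exists K, Q i K) -> exists K, 0 <= K /\ forall i, (i < d)%nat -> Q i K.
Proof. induction d; intros. exists 0. split. lra. intros; lia.
 destruct (IHd Q H) as [K1 [HK1 H1]]. intros; apply H0; lia.
 destruct (H0 d ltac:(lia)) as [K2 H2].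
 exists (Rmax K1 K2). split. eapply Rle_trans; [apply HK1|apply Rmax_l].
 intros. destruct (Nat.eq_dec i d). subst. apply (H d K2); auto. apply Rmax_r.
 apply (H i K1); auto. apply H1; lia. apply Rmax_l. Qed.

Lemma coord_le_dist1 : forall d a b k, (k < d)%nat -> Rabs (a k - b k) <= dist1 d a b.
Proof. intros. unfold dist1. apply (enorm_ge_coord d (vsub a b) k H). Qed.

Lemma sqrt_plus_le : forall a b, 0 <= a -> 0 <= b -> sqrt (a + b) <= sqrt a + sqrt b.
Proof. intros. rewrite <- (sqrt_Rsqr (sqrt a + sqrt b)).
 apply sqrt_le_1_alt. unfold Rsqr. pose proof (sqrt_sqrt a H). pose proof (sqrt_sqrt b H0).
 pose proof (sqrt_pos a). pose proof (sqrt_pos b). nra.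
 pose proof (sqrt_pos a). pose proof (sqrt_pos b). lra. Qed.

Lemma dist2_le : forall n m x u x' u', dist2 n m x u x' u' <= dist1 n x x' + dist1 m u u'.
Proof. intros. unfold dist2, dist1, enorm. apply sqrt_plus_le; apply dot_sq_nonneg. Qed.

Lemma Hess_bound : forall n m f Df D2f xs us ls,
  cont_traj n xs -> cont_traj m us -> cont_traj n ls ->
  f_C2_near_traj n m f Df D2f xs us ->
  exists K, 0 <= K /\ forall t, -1 <= t <= 1 -> forall i j, (i < n + m)%nat -> (j < n + m)%nat ->
    Rabs (HessH n D2f xs us ls t i j) <= K.
Proof. intros n m f Df D2f xs us ls Hx Hu Hl [O [HO [Hin Hf]]].
 assert (Hent : forall i j, (i < n + m)%nat -> (j < n + m)%nat -> exists K, forall t, -1 <= t <= 1 ->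
   Rabs (HessH n D2f xs us ls t i j) <= K).
 { intros i j Hi Hj.
   destruct (bound_ab (fun t => HessH n D2f xs us ls (clamp t) i j)) as [K HK].
   2:{ exists K. intros. specialize (HK t H). rewrite clamp_id in HK; auto. }
   intros c. unfold HessH. apply cpt_sumR. intros k Hk.
   apply (continuity_pt_mult (fun t => ls (clamp t) k) (fun t => D2f k (xs (clamp t)) (us (clamp t)) i j)).
   - apply cpt_intro. intros eps Heps. destruct (Hl (clamp c) (clamp_in c) eps Heps) as [del [Hd Hc]].
     exists del. split; auto. intros. eapply Rle_lt_trans. apply (coord_le_dist1 n); auto.
     apply Hc. apply clamp_in. eapply Rle_lt_trans; [apply clamp_lip|auto].
   - apply cpt_intro. intros eps Heps.
     set (cc := clamp c). destruct (Hf (xs cc) (us cc) (Hin cc (clamp_in c)) k Hk) as [_ H2].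
     destruct (H2 i Hi) as [_ [_ H3]]. destruct (H3 j Hj) as [_ Hcont].
     destruct (Hcont eps Heps) as [del [Hd Hc]].
     destruct (Hx cc (clamp_in c) (del / 2) ltac:(lra)) as [d1 [Hd1 Hc1]].
     destruct (Hu cc (clamp_in c) (del / 2) ltac:(lra)) as [d2 [Hd2 Hc2]].
     exists (Rmin d1 d2). split. apply Rmin_pos; auto. intros t Ht.
     pose proof (clamp_lip t c). fold cc in H. pose proof (Rmin_l d1 d2). pose proof (Rmin_r d1 d2).
     apply Hc. eapply Rle_lt_trans. apply dist2_le.
     assert (dist1 n (xs (clamp t)) (xs cc) < del / 2) by (apply Hc1; [apply clamp_in|lra]).
     assert (dist1 m (us (clamp t)) (us cc) < del / 2) by (apply Hc2; [apply clamp_in|lra]).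
     lra. }
 destruct (fin_bound (n + m) (fun i K => forall j, (j < n + m)%nat -> forall t, -1 <= t <= 1 ->
    Rabs (HessH n D2f xs us ls t i j) <= K)) as [K [HK0 HK]].
 - intros. eapply Rle_trans; [apply H|]; auto.
 - intros i Hi. destruct (fin_bound (n + m) (fun j K => forall t, -1 <= t <= 1 ->
     Rabs (HessH n D2f xs us ls t i j) <= K)) as [K [_ HK]].
   intros. eapply Rle_trans; [apply H|]; auto. intros j Hj. apply Hent; auto.
   exists K; auto.
 - exists K. split; auto. Qed.

Lemma mat_bound : forall d (M : mat), exists K, 0 <= K /\ forall i j, (i < d)%nat -> (j < d)%nat -> Rabs (M i j) <= K.
Proof. intros. destruct (fin_bound d (fun i K => forall j, (j < d)%nat -> Rabs (M i j) <= K)) as [K [HK0 HK]].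
 - intros. eapply Rle_trans; [apply H|]; auto.
 - intros. destruct (fin_bound d (fun j K => Rabs (M i j) <= K)) as [K [_ HK]].
   intros; lra. intros j Hj. exists (Rabs (M i j)); lra. exists K; auto.
 - exists K; auto. Qed.

Definition inr (N n i k : nat) : bool := Nat.leb 1 i && Nat.leb i N && Nat.ltb k n.
Lemma inr_true : forall N n i k, inr N n i k = true <-> (1 <= i <= N /\ k < n)%nat.
Proof. intros. unfold inr. rewrite !andb_true_iff, Nat.leb_le, Nat.leb_le, Nat.ltb_lt. tauto. Qed.

Definition Phi N n (Dinv : mat) (A : nat -> mat) (r : nat -> vec) (W : nat -> vec) : nat -> vec :=
 fun i k => if inr N n i k then sum1 N (fun j => Dinv i j * (mv n (A j) (W j) k + r j k)) else 0.
Definition supd N n (W W' : nat -> vec) : R := maxR (S N) (fun i => maxR n (fun k => Rabs (W i k - W' i k))).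

Lemma supd_ge : forall N n W W' i k, (i <= N)%nat -> (k < n)%nat -> Rabs (W i k - W' i k) <= supd N n W W'.
Proof. intros. unfold supd. eapply Rle_trans; [|apply (maxR_ge (S N) _ i); lia].
 apply (maxR_ge n (fun k => Rabs (W i k - W' i k))); auto. Qed.
Lemma supd_le : forall N n W W' b, 0 <= b -> (forall i k, (i <= N)%nat -> (k < n)%nat -> Rabs (W i k - W' i k) <= b) -> supd N n W W' <= b.
Proof. intros. unfold supd. apply maxR_le; auto. intros. apply maxR_le; auto. intros. apply H0; lia. Qed.
Lemma supd_nonneg : forall N n W W', 0 <= supd N n W W'.
Proof. intros; apply maxR_nonneg. Qed.

Lemma sumR_minus : forall k F G, sumR k F - sumR k G = sumR k (fun i => F i - G i).
Proof. intros. unfold Rminus. rewrite sumR_plus, <- sumR_opp. auto. Qed.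

Lemma rowsum_bound : forall d (a : nat -> R) (v : vec) b S, 0 <= S ->
  sumR d (fun l => Rabs (a l)) <= b -> (forall l, (l < d)%nat -> Rabs (v l) <= S) ->
  Rabs (sumR d (fun l => a l * v l)) <= b * S.
Proof. intros. eapply Rle_trans. apply sumR_abs.
 apply Rle_trans with (sumR d (fun l => Rabs (a l) * S)).
 apply sumR_le; intros. rewrite Rabs_mult. apply Rmult_le_compat_l. apply Rabs_pos. auto.
 rewrite (sumR_ext d _ (fun l => S * Rabs (a l))) by (intros; ring). rewrite sumR_scal.
 rewrite Rmult_comm. apply Rmult_le_compat_r; auto. Qed.

Lemma Phi_contr : forall N n Dinv A r W W',
  (forall i, (1 <= i <= N)%nat -> sum1 N (fun j => Rabs (Dinv i j)) <= 2) ->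
  (forall j k, (1 <= j <= N)%nat -> (k < n)%nat -> sumR n (fun l => Rabs (A j k l)) <= / 4) ->
  supd N n (Phi N n Dinv A r W) (Phi N n Dinv A r W') <= / 2 * supd N n W W'.
Proof. intros. pose proof (supd_nonneg N n W W'). apply supd_le. lra. intros i k Hi Hk.
 unfold Phi. destruct (inr N n i k) eqn:E.
 2:{ rewrite Rminus_0_r, Rabs_R0. lra. }
 apply inr_true in E. unfold sum1. rewrite sumR_minus.
 rewrite (sumR_ext N _ (fun j => Dinv i (S j) * sumR n (fun l => A (S j) k l * (W (S j) l - W' (S j) l)))).
 2:{ intros. unfold mv. rewrite <- Rmult_minus_distr_l. f_equal.
     replace (sumR n (fun l => A (S i0) k l * W (S i0) l) + r (S i0) k - (sumR n (fun l => A (S i0) k l * W' (S i0) l) + r (S i0) k))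
       with (sumR n (fun l => A (S i0) k l * W (S i0) l) - sumR n (fun l => A (S i0) k l * W' (S i0) l)) by ring.
     rewrite sumR_minus. apply sumR_ext; intros; ring. }
 replace (/ 2 * supd N n W W') with (2 * (/ 4 * supd N n W W')) by field.
 apply rowsum_bound. nra. apply H; lia.
 intros. apply rowsum_bound; auto. apply H0; lia. intros. apply supd_ge; lia. Qed.

Definition it N n Dinv A r (p : nat) : nat -> vec := Nat.iter p (Phi N n Dinv A r) (fun _ _ => 0).

Lemma half_pow_le1 : forall q, 0 <= (/ 2) ^ q <= 1.
Proof. induction q; simpl; lra. Qed.

Lemma it_out : forall N n Dinv A r p i k, inr N n i k = false -> it N n Dinv A r p i k = 0.
Proof. intros. destruct p; simpl; auto. unfold Phi. rewrite H. auto. Qed.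

Lemma it_step : forall N n Dinv A r,
  (forall i, (1 <= i <= N)%nat -> sum1 N (fun j => Rabs (Dinv i j)) <= 2) ->
  (forall j k, (1 <= j <= N)%nat -> (k < n)%nat -> sumR n (fun l => Rabs (A j k l)) <= / 4) ->
  forall p, supd N n (it N n Dinv A r (S p)) (it N n Dinv A r p) <= (/ 2) ^ p * supd N n (it N n Dinv A r 1) (it N n Dinv A r 0).
Proof. intros. induction p. simpl; lra.
 change (it N n Dinv A r (S (S p))) with (Phi N n Dinv A r (it N n Dinv A r (S p))).
 change (it N n Dinv A r (S p)) with (Phi N n Dinv A r (it N n Dinv A r p)) at 2.
 eapply Rle_trans. apply Phi_contr; auto. change ((/2)^(S p)) with (/2 * (/2)^p). lra. Qed.

Lemma it_cauchy_bound : forall N n Dinv A r,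
  (forall i, (1 <= i <= N)%nat -> sum1 N (fun j => Rabs (Dinv i j)) <= 2) ->
  (forall j k, (1 <= j <= N)%nat -> (k < n)%nat -> sumR n (fun l => Rabs (A j k l)) <= / 4) ->
  forall p q i k, Rabs (it N n Dinv A r (p + q) i k - it N n Dinv A r p i k) <=
    2 * (/ 2) ^ p * supd N n (it N n Dinv A r 1) (it N n Dinv A r 0) * (1 - (/ 2) ^ q).
Proof. intros N n Dinv A r HD HA p q i k. set (d0 := supd N n (it N n Dinv A r 1) (it N n Dinv A r 0)).
 assert (Hd0 : 0 <= d0) by apply supd_nonneg.
 destruct (inr N n i k) eqn:E.
 2:{ rewrite !it_out by auto. rewrite Rminus_0_r, Rabs_R0. assert (0 <= (/2)^p) by (apply pow_le; lra).
     pose proof (half_pow_le1 q). apply Rmult_le_pos; [|lra]. apply Rmult_le_pos; auto. lra. }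
 apply inr_true in E.
 induction q. rewrite Nat.add_0_r. simpl. rewrite Rminus_diag, Rabs_R0. lra.
 replace (p + S q)%nat with (S (p + q)) by lia.
 pose proof (supd_ge N n (it N n Dinv A r (S (p + q))) (it N n Dinv A r (p + q)) i k ltac:(lia) ltac:(lia)) as H1.
 pose proof (Rle_trans _ _ _ H1 (it_step N n Dinv A r HD HA (p + q))) as H2. fold d0 in H2.
 rewrite pow_add in H2.
 replace (it N n Dinv A r (S (p + q)) i k - it N n Dinv A r p i k) with
   ((it N n Dinv A r (S (p + q)) i k - it N n Dinv A r (p + q) i k) + (it N n Dinv A r (p + q) i k - it N n Dinv A r p i k)) by ring.
 eapply Rle_trans. apply Rabs_triang. simpl pow.
 assert (0 <= (/2)^p) by (apply pow_le; lra). assert (0 <= (/2)^q) by (apply pow_le; lra).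
 nra. Qed.

Lemma it_cauchy : forall N n Dinv A r,
  (forall i, (1 <= i <= N)%nat -> sum1 N (fun j => Rabs (Dinv i j)) <= 2) ->
  (forall j k, (1 <= j <= N)%nat -> (k < n)%nat -> sumR n (fun l => Rabs (A j k l)) <= / 4) ->
  forall i k, Cauchy_crit (fun p => it N n Dinv A r p i k).
Proof. intros N n Dinv A r HD HA i k eps Heps.
 set (d0 := supd N n (it N n Dinv A r 1) (it N n Dinv A r 0)).
 assert (Hd0 : 0 <= d0) by apply supd_nonneg.
 destruct (pow_lt_1_zero (/ 2) ltac:(rewrite Rabs_right; lra) (eps / (4 * d0 + 1)) ltac:(apply Rdiv_lt_0_compat; lra)) as [P HP].
 exists P. intros p q Hp Hq. unfold Rdist.
 pose proof (it_cauchy_bound N n Dinv A r HD HA P (p - P) i k) as B1.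
 pose proof (it_cauchy_bound N n Dinv A r HD HA P (q - P) i k) as B2.
 replace (P + (p - P))%nat with p in B1 by lia. replace (P + (q - P))%nat with q in B2 by lia.
 fold d0 in B1, B2. specialize (HP P (le_n P)). rewrite Rabs_right in HP by (apply Rle_ge, pow_le; lra).
 assert (0 <= (/2)^(p-P)) by (apply pow_le; lra). assert (0 <= (/2)^(q-P)) by (apply pow_le; lra).
 assert (0 <= (/2)^P) by (apply pow_le; lra).
 replace (it N n Dinv A r p i k - it N n Dinv A r q i k) with
   ((it N n Dinv A r p i k - it N n Dinv A r P i k) - (it N n Dinv A r q i k - it N n Dinv A r P i k)) by ring.
 eapply Rle_lt_trans. apply Rabs_triang. rewrite Rabs_Ropp.
 assert (4 * (/2)^P * d0 < eps).
 { apply Rmult_lt_compat_r with (r := 4 * d0 + 1) in HP; [|lra].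
   replace (eps / (4 * d0 + 1) * (4 * d0 + 1)) with eps in HP by (field; lra). nra. }
 assert (0 <= 2 * (/2)^P * d0) by (apply Rmult_le_pos; lra).
 assert (2 * (/ 2) ^ P * d0 * (1 - (/ 2) ^ (p - P)) <= 2 * (/2)^P * d0) by nra.
 assert (2 * (/ 2) ^ P * d0 * (1 - (/ 2) ^ (q - P)) <= 2 * (/2)^P * d0) by nra.
 lra. Qed.

Lemma cv_sumR : forall k (F : nat -> nat -> R) (G : nat -> R),
  (forall j, (j < k)%nat -> Un_cv (fun p => F p j) (G j)) -> Un_cv (fun p => sumR k (F p)) (sumR k G).
Proof. induction k; intros; simpl. intros eps Heps. exists O. intros. unfold Rdist. rewrite Rminus_diag, Rabs_R0. lra.
 apply (CV_plus (fun p => sumR k (F p)) (fun p => F p k)). apply IHk; intros; apply H; lia. apply H; lia. Qed.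

Lemma cv_const : forall c, Un_cv (fun _ => c) c.
Proof. intros c eps Heps. exists O. intros. unfold Rdist. rewrite Rminus_diag, Rabs_R0. lra. Qed.

Lemma cv_shift : forall u l, Un_cv u l -> Un_cv (fun p => u (S p)) l.
Proof. intros u l H eps Heps. destruct (H eps Heps) as [P HP]. exists P. intros. apply HP. lia. Qed.

Lemma solve_sys : forall N n (D Dinv : mat) (A : nat -> mat) (r : nat -> vec) R,
  (forall i j, (1 <= i <= N)%nat -> (1 <= j <= N)%nat -> sum1 N (fun k => D i k * Dinv k j) = if Nat.eqb i j then 1 else 0) ->
  (forall i, (1 <= i <= N)%nat -> sum1 N (fun j => Rabs (Dinv i j)) <= 2) ->
  (forall j k, (1 <= j <= N)%nat -> (k < n)%nat -> sumR n (fun l => Rabs (A j k l)) <= / 4) ->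
  0 <= R -> (forall i k, (1 <= i <= N)%nat -> (k < n)%nat -> Rabs (r i k) <= R) ->
  exists W : nat -> vec,
    (forall i k, (1 <= i <= N)%nat -> (k < n)%nat -> sum1 N (fun j => D i j * W j k) = mv n (A i) (W i) k + r i k) /\
    (forall i k, (1 <= i <= N)%nat -> (k < n)%nat -> Rabs (W i k) <= 4 * R).
Proof. intros N n D Dinv A r R HDD HD HA HR Hr.
 set (W := fun i k => proj1_sig (R_complete _ (it_cauchy N n Dinv A r HD HA i k))).
 assert (HW : forall i k, Un_cv (fun p => it N n Dinv A r p i k) (W i k)).
 { intros. unfold W. destruct (R_complete _ (it_cauchy N n Dinv A r HD HA i k)). simpl. auto. }
 assert (Hfix : forall i k, (1 <= i <= N)%nat -> (k < n)%nat ->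
   W i k = sum1 N (fun j => Dinv i j * (mv n (A j) (W j) k + r j k))).
 { intros i k Hi Hk. apply (UL_sequence (fun p => it N n Dinv A r (S p) i k)).
   apply (cv_shift (fun p => it N n Dinv A r p i k)); auto.
   assert (E : forall p, it N n Dinv A r (S p) i k = sum1 N (fun j => Dinv i j * (mv n (A j) (it N n Dinv A r p j) k + r j k))).
   { intros. change (it N n Dinv A r (S p)) with (Phi N n Dinv A r (it N n Dinv A r p)). unfold Phi.
     destruct (inr N n i k) eqn:Ei; auto. exfalso. assert (inr N n i k = true) by (apply inr_true; auto). congruence. }
   intros eps Heps. assert (Un_cv (fun p => sum1 N (fun j => Dinv i j * (mv n (A j) (it N n Dinv A r p j) k + r j k)))
     (sum1 N (fun j => Dinv i j * (mv n (A j) (W j) k + r j k)))).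
   { unfold sum1. apply (cv_sumR N (fun p j => Dinv i (S j) * (mv n (A (S j)) (it N n Dinv A r p (S j)) k + r (S j) k))).
     intros. apply CV_mult. apply cv_const. apply CV_plus; [|apply cv_const].
     unfold mv. apply (cv_sumR n (fun p l => A (S j) k l * it N n Dinv A r p (S j) l)). intros.
     apply CV_mult. apply cv_const. apply HW. }
   destruct (H eps Heps) as [P HP]. exists P. intros. rewrite E. apply HP; auto. }
 exists W. split.
 - intros i k Hi Hk.
   rewrite (sum1_ext N (fun j => D i j * W j k) (fun j => D i j * sum1 N (fun p => Dinv j p * (mv n (A p) (W p) k + r p k)))).
   2:{ intros. rewrite Hfix; auto. }
   rewrite (sum1_ext N _ (fun j => sum1 N (fun p => D i j * Dinv j p * (mv n (A p) (W p) k + r p k)))).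
   2:{ intros. rewrite <- sum1_scal. apply sum1_ext; intros; ring. }
   unfold sum1 at 1. rewrite (sumR_ext N _ (fun j => sumR N (fun p => D i (S j) * Dinv (S j) (S p) * (mv n (A (S p)) (W (S p)) k + r (S p) k)))) by auto.
   rewrite sumR_swap.
   rewrite (sumR_ext N _ (fun p => (if Nat.eqb p (i - 1) then 1 else 0) * (mv n (A (S p)) (W (S p)) k + r (S p) k))).
   2:{ intros.
       rewrite (sumR_ext N _ (fun j => (mv n (A (S i0)) (W (S i0)) k + r (S i0) k) * (D i (S j) * Dinv (S j) (S i0)))) by (intros; ring).
       rewrite sumR_scal. change (sumR N (fun j => D i (S j) * Dinv (S j) (S i0))) with (sum1 N (fun j => D i j * Dinv j (S i0))).
       rewrite HDD by lia. destruct (Nat.eqb_spec i (S i0)); destruct (Nat.eqb_spec i0 (i - 1)); try lia; ring. }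
   rewrite (sumR_ext N _ (fun p => if Nat.eqb p (i - 1) then mv n (A i) (W i) k + r i k else 0)).
   2:{ intros. destruct (Nat.eqb_spec i0 (i - 1)). replace (S i0) with i by lia. ring. ring. }
   rewrite sumR_single. destruct (Nat.ltb_spec (i - 1) N); [auto|lia].
 - set (Mw := supd N n W (fun _ _ => 0)).
   assert (HM : Mw <= / 2 * Mw + 2 * R).
   { apply supd_le. pose proof (supd_nonneg N n W (fun _ _ => 0)). fold Mw in H. lra.
     intros i k Hi Hk. rewrite Rminus_0_r. destruct (Nat.eq_dec i 0).
     - subst. replace (W 0%nat k) with 0. rewrite Rabs_R0. pose proof (supd_nonneg N n W (fun _ _ => 0)). fold Mw in H. lra.
       apply (UL_sequence (fun p => it N n Dinv A r p 0%nat k)).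
       intros eps Heps. exists O. intros. unfold Rdist. rewrite it_out. rewrite Rminus_0_r, Rabs_R0. lra. auto. auto.
     - rewrite Hfix by lia. replace (/ 2 * Mw + 2 * R) with (2 * (/ 4 * Mw + R)) by field.
       unfold sum1. apply rowsum_bound. pose proof (supd_nonneg N n W (fun _ _ => 0)). fold Mw in H. lra.
       apply HD; lia. intros. eapply Rle_trans. apply Rabs_triang. apply Rplus_le_compat.
       apply rowsum_bound. pose proof (supd_nonneg N n W (fun _ _ => 0)). fold Mw in H0. lra.
       apply HA; lia. intros. pose proof (supd_ge N n W (fun _ _ => 0) (S l) l0 ltac:(lia) H0). rewrite Rminus_0_r in H1. auto.
       apply Hr; lia. }
   intros i k Hi Hk. pose proof (supd_ge N n W (fun _ _ => 0) i k ltac:(lia) Hk). rewrite Rminus_0_r in H. fold Mw in H. lra.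
Qed.

Lemma sumR_const : forall d c, sumR d (fun _ => c) = INR d * c.
Proof. induction d; intros; simpl. ring. rewrite IHd. destruct d; simpl; ring. Qed.

Lemma amgm : forall e c x, 0 < e -> 0 <= c -> c * Rabs x <= e * (x * x) + c * c / (4 * e).
Proof. intros. assert (x * x = Rabs x * Rabs x). rewrite <- Rabs_mult. symmetry. apply Rabs_pos_eq. nra.
 rewrite H1. pose proof (Rabs_pos x). set (y := Rabs x) in *.
 pose proof (Rle_0_sqr (2 * e * y - c)). unfold Rsqr in *.
 apply Rmult_le_reg_r with (4 * e). lra.
 replace ((e * (y * y) + c * c / (4 * e)) * (4 * e)) with (4 * e * e * y * y + c * c) by (field; lra). nra. Qed.

Lemma sum_amgm : forall d (g : nat -> R) (b : vec) c e, 0 < e -> 0 <= c ->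
  (forall l, (l < d)%nat -> Rabs (g l) <= c * Rabs (b l)) ->
  Rabs (sumR d g) <= e * dot d b b + INR d * (c * c) / (4 * e).
Proof. intros. eapply Rle_trans. apply sumR_abs.
 apply Rle_trans with (sumR d (fun l => e * (b l * b l) + c * c / (4 * e))).
 apply sumR_le; intros. eapply Rle_trans. apply H1; auto. apply amgm; auto.
 rewrite sumR_plus, sumR_scal, sumR_const. unfold dot. unfold Rdiv. lra. Qed.

Lemma inner_bound : forall d (a : vec) (f : nat -> R) Ma K, 0 <= Ma -> 0 <= K ->
  (forall k, (k < d)%nat -> Rabs (a k) <= Ma) -> (forall k, (k < d)%nat -> Rabs (f k) <= K) ->
  Rabs (sumR d (fun k => a k * f k)) <= INR d * K * Ma.
Proof. intros. eapply Rle_trans. apply sumR_abs.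
 apply Rle_trans with (sumR d (fun _ => K * Ma)). apply sumR_le; intros. rewrite Rabs_mult.
 rewrite Rmult_comm. apply Rmult_le_compat; auto using Rabs_pos.
 rewrite sumR_const. lra. Qed.

Lemma L_qf1 : forall d1 d2 M a b K Ma e, 0 < e -> 0 <= K -> 0 <= Ma ->
  (forall k, (k < d1)%nat -> Rabs (a k) <= Ma) ->
  (forall k l, (k < d1)%nat -> (l < d2)%nat -> Rabs (M k l) <= K) ->
  Rabs (qform d1 d2 M a b) <= e * dot d2 b b + INR d2 * ((INR d1 * K * Ma) * (INR d1 * K * Ma)) / (4 * e).
Proof. intros. unfold qform. rewrite sumR_swap.
 apply sum_amgm; auto. pose proof (pos_INR d1). apply Rmult_le_pos; [apply Rmult_le_pos|]; auto.
 intros.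
 rewrite (sumR_ext d1 _ (fun k => b l * (a k * M k l))) by (intros; ring). rewrite sumR_scal.
 rewrite Rabs_mult, Rmult_comm. apply Rmult_le_compat_r. apply Rabs_pos.
 apply inner_bound; auto. Qed.

Lemma L_qf2 : forall d1 d2 M a b K Ma e, 0 < e -> 0 <= K -> 0 <= Ma ->
  (forall l, (l < d2)%nat -> Rabs (a l) <= Ma) ->
  (forall k l, (k < d1)%nat -> (l < d2)%nat -> Rabs (M k l) <= K) ->
  Rabs (qform d1 d2 M b a) <= e * dot d1 b b + INR d1 * ((INR d2 * K * Ma) * (INR d2 * K * Ma)) / (4 * e).
Proof. intros. unfold qform.
 apply sum_amgm; auto. pose proof (pos_INR d2). apply Rmult_le_pos; [apply Rmult_le_pos|]; auto.
 intros k Hk. rewrite (sumR_ext d2 _ (fun l => b k * (a l * M k l))) by (intros; ring). rewrite sumR_scal.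
 rewrite Rabs_mult, Rmult_comm. apply Rmult_le_compat_r. apply Rabs_pos.
 apply inner_bound; auto. Qed.

Lemma L_dot : forall d a b Ma e, 0 < e -> 0 <= Ma ->
  (forall k, (k < d)%nat -> Rabs (a k) <= Ma) ->
  Rabs (dot d a b) <= e * dot d b b + INR d * (Ma * Ma) / (4 * e).
Proof. intros. unfold dot. apply sum_amgm; auto. intros. rewrite Rabs_mult. apply Rmult_le_compat_r. apply Rabs_pos. auto. Qed.

Lemma dot_plusl : forall d a a' b, dot d (fun k => a k + a' k) b = dot d a b + dot d a' b.
Proof. intros. unfold dot. rewrite <- sumR_plus. apply sumR_ext; intros; ring. Qed.
Lemma dot_plusr : forall d a b b', dot d a (fun k => b k + b' k) = dot d a b + dot d a b'.
Proof. intros. unfold dot. rewrite <- sumR_plus. apply sumR_ext; intros; ring. Qed.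
Lemma dot_zero_r : forall d a, dot d a (fun _ => 0) = 0.
Proof. intros. unfold dot. apply sumR_zero; intros; ring. Qed.
Lemma dot_zero_l : forall d a b, (forall k, (k < d)%nat -> a k = 0) -> dot d a b = 0.
Proof. intros. unfold dot. apply sumR_zero; intros. rewrite H; auto; ring. Qed.
Lemma qform_zero_r : forall d1 d2 M a, qform d1 d2 M a (fun _ => 0) = 0.
Proof. intros. unfold qform. apply sumR_zero; intros; apply sumR_zero; intros; ring. Qed.

Lemma cost_diff : forall n m N w T Q S Rm y3 y4 y5 y6 (Xb Z U : nat -> vec),
  (forall k, (k < n)%nat -> Z O k = 0) ->
  QP_cost n m N w T Q S Rm y3 y4 y5 y6 (fun j k => Xb j k + Z j k) U
  - QP_cost n m N w T Q S Rm y3 y4 y5 y6 Xb (fun _ _ => 0) =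
  / 2 * ((qform n n T (Z N) (Z N) + sum1 N (fun i => w i * (qform n n (Q i) (Z i) (Z i)
            + 2 * qform n m (S i) (Z i) (U i) + qform m m (Rm i) (U i) (U i))))
        + (qform n n T (Xb N) (Z N) + qform n n T (Z N) (Xb N)
           + sum1 N (fun i => w i * (qform n n (Q i) (Xb i) (Z i) + qform n n (Q i) (Z i) (Xb i)
                                     + 2 * qform n m (S i) (Xb i) (U i)))))
  - sum1 N (fun i => w i * (dot n (y4ext N y4 y5 i) (Z i) + dot m (y6 i) (U i))).
Proof. intros. unfold QP_cost.
 rewrite (qform_plusl n n T (Xb N) (Z N)), !qform_plusr.
 rewrite (dot_plusl n (Xb O) (Z O)). rewrite (dot_zero_l n (Z O)) by auto.
 rewrite (sum1_ext N (fun i => w i * (qform n n (Q i) (fun k => Xb i k + Z i k) (fun k => Xb i k + Z i k) +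
     2 * qform n m (S i) (fun k => Xb i k + Z i k) (U i) + qform m m (Rm i) (U i) (U i)))
   (fun i => w i * (qform n n (Q i) (Xb i) (Xb i) + 2 * qform n m (S i) (Xb i) (fun _ => 0) + qform m m (Rm i) (fun _ => 0) (fun _ => 0))
     + (w i * (qform n n (Q i) (Z i) (Z i) + 2 * qform n m (S i) (Z i) (U i) + qform m m (Rm i) (U i) (U i))
     + w i * (qform n n (Q i) (Xb i) (Z i) + qform n n (Q i) (Z i) (Xb i) + 2 * qform n m (S i) (Xb i) (U i))))).
 2:{ intros. rewrite (qform_plusl n n (Q i) (Xb i) (Z i)), !qform_plusr.
     rewrite (qform_plusl n m (S i) (Xb i) (Z i)). rewrite !qform_zero_r. ring. }
 rewrite (sum1_ext N (fun i => w i * (dot n (y4ext N y4 y5 i) (fun k => Xb i k + Z i k) + dot m (y6 i) (U i)))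
   (fun i => w i * (dot n (y4ext N y4 y5 i) (Xb i) + dot m (y6 i) (fun _ => 0)) + w i * (dot n (y4ext N y4 y5 i) (Z i) + dot m (y6 i) (U i)))).
 2:{ intros. rewrite (dot_plusr n (y4ext N y4 y5 i) (Xb i) (Z i)). rewrite dot_zero_r. ring. }
 rewrite !sum1_plus. ring. Qed.

Definition catv (n : nat) (a b : vec) : vec := fun k => if Nat.ltb k n then a k else b (k - n)%nat.

Lemma catv_l : forall n a b k, (k < n)%nat -> catv n a b k = a k.
Proof. intros. unfold catv. destruct (Nat.ltb_spec k n); auto; lia. Qed.
Lemma catv_r : forall n a b k, catv n a b (n + k)%nat = b k.
Proof. intros. unfold catv. destruct (Nat.ltb_spec (n + k) n); try lia. f_equal; lia. Qed.

Lemma dot_cat : forall n m a b, dot (n + m) (catv n a b) (catv n a b) = dot n a a + dot m b b.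
Proof. intros. unfold dot. rewrite sumR_split. f_equal.
 apply sumR_ext; intros; rewrite catv_l; auto.
 apply sumR_ext; intros; rewrite catv_r; auto. Qed.

Lemma node_split : forall n m (H : mat) a b, symm (n + m) H ->
  qform n n (fun i j => H i j) a a + 2 * qform n m (fun i j => H i (n + j)%nat) a b
  + qform m m (fun i j => H (n + i)%nat (n + j)%nat) b b
  = qform (n + m) (n + m) H (catv n a b) (catv n a b).
Proof. intros. unfold qform. symmetry. rewrite sumR_split.
 rewrite (sumR_ext n (fun k => sumR (n + m) (fun l => catv n a b k * H k l * catv n a b l))
   (fun k => sumR n (fun l => a k * H k l * a l) + sumR m (fun l => a k * H k (n + l)%nat * b l))).
 2:{ intros. cbv beta. rewrite sumR_split. rewrite !catv_l by auto. f_equal.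
     apply sumR_ext; intros; rewrite catv_l; auto. apply sumR_ext; intros; rewrite catv_r; auto. }
 rewrite (sumR_ext m (fun k => sumR (n + m) (fun l => catv n a b (n + k)%nat * H (n + k)%nat l * catv n a b l))
   (fun k => sumR n (fun l => a l * H l (n + k)%nat * b k) + sumR m (fun l => b k * H (n + k)%nat (n + l)%nat * b l))).
 2:{ intros. cbv beta. rewrite sumR_split. rewrite !catv_r. f_equal.
     apply sumR_ext; intros. rewrite catv_l by auto. rewrite (H0 (n + i)%nat i0) by lia. ring.
     apply sumR_ext; intros; rewrite catv_r; auto. }
 rewrite !sumR_plus. rewrite (sumR_swap m n). ring. Qed.

Lemma dot_sum_le : forall d a b, dot d (fun k => a k + b k) (fun k => a k + b k) <= 2 * dot d a a + 2 * dot d b b.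
Proof. intros. unfold dot. rewrite <- !sumR_scal, <- sumR_plus. apply sumR_le; intros.
 pose proof (Rle_0_sqr (a i - b i)). unfold Rsqr in H0. nra. Qed.

Lemma dot_bounded : forall d a M, (forall k, (k < d)%nat -> Rabs (a k) <= M) -> dot d a a <= INR d * (M * M).
Proof. intros. unfold dot. rewrite <- sumR_const. apply sumR_le; intros.
 specialize (H i H0). pose proof (Rabs_pos (a i)).
 assert (a i * a i = Rabs (a i) * Rabs (a i)). rewrite <- Rabs_mult. symmetry. apply Rabs_pos_eq. nra.
 rewrite H2. apply Rmult_le_compat; auto. Qed.

Lemma tau_mono : forall N (tau : nat -> R), (forall i, (1 <= i < N)%nat -> tau i < tau (S i)) ->
  forall a b, (1 <= a)%nat -> (a <= b <= N)%nat -> tau a <= tau b.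
Proof. intros N tau H a b Ha. induction b; intros. lia.
 destruct (Nat.eq_dec a (S b)). subst; lra. assert (tau a <= tau b) by (apply IHb; lia).
 assert (tau b < tau (S b)) by (apply H; lia). lra. Qed.

Lemma tau_strict : forall N (tau : nat -> R), tau O = -1 -> -1 < tau 1%nat ->
  (forall i, (1 <= i < N)%nat -> tau i < tau (S i)) ->
  forall a b, (a < b <= N)%nat -> tau a < tau b.
Proof. intros N tau H0 H1 H a b. induction b; intros. lia.
 destruct (Nat.eq_dec a b). subst b. destruct a. lra. apply H; lia.
 assert (tau a < tau b) by (apply IHb; lia).
 destruct b. lia. assert (tau (S b) < tau (S (S b))) by (apply H; lia). lra. Qed.

Lemma yn_1 : forall n m N y1 y2 y3 y4 y5 y6 i, (1 <= i <= N)%nat -> enorm n (y1 i) <= ynorm n m N y1 y2 y3 y4 y5 y6.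
Proof. intros. unfold ynorm. eapply Rle_trans; [|apply Rmax_l]. apply (max1_ge N (fun i => enorm n (y1 i))); auto. Qed.
Lemma yn_2 : forall n m N y1 y2 y3 y4 y5 y6, enorm n y2 <= ynorm n m N y1 y2 y3 y4 y5 y6.
Proof. intros. unfold ynorm. eapply Rle_trans; [|apply Rmax_r]. apply Rmax_l. Qed.
Lemma yn_4 : forall n m N y1 y2 y3 y4 y5 y6 i, (1 <= i <= N - 1)%nat -> enorm n (y4 i) <= ynorm n m N y1 y2 y3 y4 y5 y6.
Proof. intros. unfold ynorm. do 3 (eapply Rle_trans; [|apply Rmax_r]). eapply Rle_trans; [|apply Rmax_l].
 apply (max1_ge (N - 1) (fun i => enorm n (y4 i))); auto. Qed.
Lemma yn_5 : forall n m N y1 y2 y3 y4 y5 y6, enorm n y5 <= ynorm n m N y1 y2 y3 y4 y5 y6.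
Proof. intros. unfold ynorm. do 4 (eapply Rle_trans; [|apply Rmax_r]). apply Rmax_l. Qed.
Lemma yn_6 : forall n m N y1 y2 y3 y4 y5 y6 i, (1 <= i <= N)%nat -> enorm m (y6 i) <= ynorm n m N y1 y2 y3 y4 y5 y6.
Proof. intros. unfold ynorm. do 5 (eapply Rle_trans; [|apply Rmax_r]).
 apply (max1_ge N (fun i => enorm m (y6 i))); auto. Qed.

Lemma neg_le_abs : forall x, - x <= Rabs x.
Proof. intros. rewrite <- Rabs_Ropp. apply RRle_abs. Qed.

Theorem lemma5p1 (n m : nat) (f : vec -> vec -> vec) (C : vec -> R)
  (Df : nat -> vec -> vec -> nat -> R) (D2f : nat -> vec -> vec -> nat -> nat -> R)
  (DC : vec -> nat -> R) (D2C : vec -> nat -> nat -> R)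
  (xs us ls : R -> vec) :
  cont_traj n xs -> cont_traj m us -> cont_traj n ls ->
  f_C2_near_traj n m f Df D2f xs us ->
  C_C2_near n C DC D2C (xs 1) ->
  (* (A2) *)
  (exists alpha, 0 < alpha /\
     smallest_eigenvalue_gt n (D2C (xs 1)) alpha /\
     forall t, -1 <= t <= 1 ->
       smallest_eigenvalue_gt (n + m) (HessH n D2f xs us ls t) alpha) ->
  (* (A3) *)
  (forall t, -1 <= t <= 1 ->
     inf_norm n n (Amat Df xs us t) <= / 4 /\
     inf_norm n n (trm (Amat Df xs us t)) <= / 4) ->
  (* (P1) *)
  (forall (N : nat) (tau w : nat -> R) (D : mat), (2 <= N)%nat ->
     radau N tau w -> is_diff_matrix N tau D -> P1 N D) ->
  exists c : R,
    forall (N : nat) (tau w : nat -> R) (D : mat), (2 <= N)%nat ->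
      radau N tau w -> is_diff_matrix N tau D ->
      forall (y1 : nat -> vec) (y2 y3 : vec) (y4 : nat -> vec) (y5 : vec)
             (y6 : nat -> vec) (X U : nat -> vec),
        QP_solution n m N w D
          (fun i => Amat Df xs us (tau i))
          (fun i => Bmat n Df xs us (tau i))
          (fun i => Qmat n D2f xs us ls (tau i))
          (fun i => Smat n D2f xs us ls (tau i))
          (fun i => Rmat n D2f xs us ls (tau i))
          (D2C (xs 1)) y1 y2 y3 y4 y5 y6 X U ->
        Xnorm n N w X <= c * ynorm n m N y1 y2 y3 y4 y5 y6 /\
        Unorm m N w U <= c * ynorm n m N y1 y2 y3 y4 y5 y6.
Proof.
 intros Hxs Hus Hls Hf HCC [alpha [Ha [HaT HaH]]] HA3 HP1.
 destruct (Hess_bound n m f Df D2f xs us ls Hxs Hus Hls Hf) as [KH [HKH0 HKH]].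
 destruct (mat_bound n (D2C (xs 1))) as [KT [HKT0 HKT]].
 pose proof (C_symm n C DC D2C (xs 1) HCC) as HsT.
 pose proof (Hess_symm n m f Df D2f xs us ls Hf) as HsH.
 set (e := alpha / 8).
 assert (He : 0 < e) by (unfold e; lra).
 set (cT := INR n * ((INR n * KT * 9) * (INR n * KT * 9)) / (4 * e)).
 set (cQ := INR n * ((INR n * KH * 9) * (INR n * KH * 9)) / (4 * e)).
 set (cS := INR m * ((INR n * KH * 9) * (INR n * KH * 9)) / (4 * e)).
 set (cL4 := INR n * (1 * 1) / (4 * e)).
 set (cL6 := INR m * (1 * 1) / (4 * e)).
 set (kap := 2 * cT + 4 * (cQ + cS + cL4 + cL6)).
 assert (Hkap : 0 <= kap).
 { pose proof (pos_INR n). pose proof (pos_INR m).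
   assert (0 < 4 * e) by lra.
   unfold kap, cT, cQ, cS, cL4, cL6. unfold Rdiv.
   assert (0 <= / (4 * e)) by (left; apply Rinv_0_lt_compat; lra).
   repeat (apply Rplus_le_le_0_compat || apply Rmult_le_pos); try lra; nra. }
 exists (sqrt (486 * INR n + 4 * kap / alpha + 1)).
 intros N tau w D HN Hrad Hdiff y1 y2 y3 y4 y5 y6 X U [Hfeas Hopt].
 destruct (HP1 N tau w D HN Hrad Hdiff) as [Dinv [HDD [_ HDinv]]].
 destruct Hrad as [Ht0 [Ht1 [Hinc [HtN [Hw Hq]]]]].
 assert (Htau : forall i, (1 <= i <= N)%nat -> -1 <= tau i <= 1).
 { intros. split. pose proof (tau_mono N tau Hinc 1 i ltac:(lia) ltac:(lia)). lra.
   rewrite <- HtN. apply (tau_mono N tau Hinc); lia. }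
 assert (Hdst : forall a b, (a <= N)%nat -> (b <= N)%nat -> a <> b -> tau a <> tau b).
 { intros. destruct (Nat.lt_total a b) as [Hab|[Hab|Hab]]; [|lia|].
   pose proof (tau_strict N tau Ht0 Ht1 Hinc a b ltac:(lia)). lra.
   pose proof (tau_strict N tau Ht0 Ht1 Hinc b a ltac:(lia)). lra. }
 assert (Hsw : sum1 N w = 2).
 { pose proof (Hq O ltac:(lia)). simpl in H.
   rewrite (sum1_ext N _ w) in H by (intros; ring). rewrite H. field. }
 pose proof (D_rowsum N tau D Hdiff Hdst) as Hrow.
 set (Y := ynorm n m N y1 y2 y3 y4 y5 y6).
 assert (HY0 : 0 <= Y).
 { unfold Y, ynorm. eapply Rle_trans; [apply max1_nonneg | apply Rmax_l]. }
 assert (Hy1 : forall i k, (1 <= i <= N)%nat -> (k < n)%nat -> Rabs (y1 i k) <= Y).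
 { intros. eapply Rle_trans. apply enorm_ge_coord; eauto. apply yn_1; auto. }
 assert (Hy2 : forall k, (k < n)%nat -> Rabs (y2 k) <= Y).
 { intros. eapply Rle_trans. apply enorm_ge_coord; eauto. apply yn_2. }
 assert (Hy4 : forall i k, (1 <= i <= N)%nat -> (k < n)%nat -> Rabs (y4ext N y4 y5 i k) <= Y).
 { intros. unfold y4ext. destruct (Nat.eqb_spec i N).
   - eapply Rle_trans. apply enorm_ge_coord; eauto. apply yn_5.
   - eapply Rle_trans. apply enorm_ge_coord; eauto. apply yn_4; lia. }
 assert (Hy6 : forall i k, (1 <= i <= N)%nat -> (k < m)%nat -> Rabs (y6 i k) <= Y).
 { intros. eapply Rle_trans. apply enorm_ge_coord; eauto. apply yn_6; auto. }
 set (A := fun i => Amat Df xs us (tau i)).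
 assert (HA : forall j k, (1 <= j <= N)%nat -> (k < n)%nat -> sumR n (fun l => Rabs (A j k l)) <= / 4).
 { intros. destruct (HA3 (tau j) (Htau j H)) as [H1 _]. eapply Rle_trans; [|apply H1].
   unfold inf_norm. apply (maxR_ge n (fun k => sumR n (fun l => Rabs (Amat Df xs us (tau j) k l)))). auto. }
 set (r := fun i k => y1 i k + sumR n (fun l => A i k l * y2 l)).
 assert (Hr : forall i k, (1 <= i <= N)%nat -> (k < n)%nat -> Rabs (r i k) <= 2 * Y).
 { intros. unfold r. eapply Rle_trans. apply Rabs_triang.
   assert (Rabs (sumR n (fun l => A i k l * y2 l)) <= / 4 * Y) by (apply rowsum_bound; auto).
   pose proof (Hy1 i k H H0). lra. }
 destruct (solve_sys N n D Dinv A r (2 * Y) HDD HDinv HA ltac:(lra) Hr) as [W [HWeq HWb]].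
 set (Xb := fun j k => if Nat.eqb j O then y2 k else y2 k + W j k).
 set (U0 := fun (_ : nat) (_ : nat) => 0).
 assert (HXb : forall j k, (j <= N)%nat -> (k < n)%nat -> Rabs (Xb j k) <= 9 * Y).
 { intros. unfold Xb. destruct (Nat.eqb_spec j O). pose proof (Hy2 k H0). lra.
   eapply Rle_trans. apply Rabs_triang. pose proof (Hy2 k H0). pose proof (HWb j k ltac:(lia) H0). lra. }
 assert (Hfb : QP_feasible n m N D (fun i => Amat Df xs us (tau i)) (fun i => Bmat n Df xs us (tau i)) y1 y2 Xb U0).
 { split. intros. unfold Xb. auto.
   intros i Hi k Hk. rewrite sumR_shift. unfold Xb at 1. simpl.
   rewrite (sumR_ext N (fun i0 => D i (S i0) * Xb (S i0) k) (fun j => y2 k * D i (S j) + D i (S j) * W (S j) k)).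
   2:{ intros. unfold Xb. simpl. ring. }
   rewrite sumR_plus, sumR_scal. change (sumR N (fun j => D i (S j) * W (S j) k)) with (sum1 N (fun j => D i j * W j k)).
   rewrite HWeq by auto. pose proof (Hrow i Hi). rewrite sumR_shift in H.
   assert (E1 : mv m (Bmat n Df xs us (tau i)) (U0 i) k = 0) by (unfold mv, U0; apply sumR_zero; intros; ring).
   assert (E2 : mv n (Amat Df xs us (tau i)) (Xb i) k = mv n (A i) (W i) k + sumR n (fun l => A i k l * y2 l)).
   { unfold mv, Xb, A. destruct (Nat.eqb_spec i O); [lia|]. rewrite <- sumR_plus. apply sumR_ext; intros; ring. }
   assert (E3 : D i O * y2 k + y2 k * sumR N (fun i0 => D i (S i0)) = y2 k * (D i O + sumR N (fun i0 => D i (S i0)))) by ring.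
   rewrite H in E3. rewrite E1, E2. unfold r. lra. }
 pose proof (Hopt Xb U0 Hfb) as Hle.
 set (Z := fun j k => X j k - Xb j k).
 assert (HXZ : X = fun j k => Xb j k + Z j k).
 { apply functional_extensionality; intros j. apply functional_extensionality; intros k. unfold Z. ring. }
 assert (HZ0 : forall k, (k < n)%nat -> Z O k = 0).
 { intros. unfold Z. destruct Hfeas as [H0 _]. rewrite H0 by auto. unfold Xb. simpl. ring. }
 rewrite HXZ in Hle. apply Rle_minus in Hle. unfold U0 in Hle. rewrite cost_diff in Hle by auto.
 set (T := D2C (xs 1)) in *.
 set (dZN := dot n (Z N) (Z N)).
 set (Qs := sum1 N (fun i => w i * (qform n n (Qmat n D2f xs us ls (tau i)) (Z i) (Z i) + 2 * qform n m (Smat n D2f xs us ls (tau i)) (Z i) (U i) + qform m m (Rmat n D2f xs us ls (tau i)) (U i) (U i)))) in *.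
 set (Cs := sum1 N (fun i => w i * (qform n n (Qmat n D2f xs us ls (tau i)) (Xb i) (Z i) + qform n n (Qmat n D2f xs us ls (tau i)) (Z i) (Xb i) + 2 * qform n m (Smat n D2f xs us ls (tau i)) (Xb i) (U i)))) in *.
 set (Ls := sum1 N (fun i => w i * (dot n (y4ext N y4 y5 i) (Z i) + dot m (y6 i) (U i)))) in *.
 set (Ss := sum1 N (fun i => w i * (dot n (Z i) (Z i) + dot m (U i) (U i)))).
 assert (HdZN : 0 <= dZN) by apply dot_sq_nonneg.
 assert (HSs : 0 <= Ss).
 { apply sum1_nonneg. intros. pose proof (Hw i H). pose proof (dot_sq_nonneg n (Z i)). pose proof (dot_sq_nonneg m (U i)). nra. }
 assert (HTl : alpha * dZN <= qform n n T (Z N) (Z N)) by (apply PD_eigen; auto).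
 assert (HQl : alpha * Ss <= Qs).
 { unfold Ss, Qs. rewrite <- sum1_scal. apply sum1_le. intros i Hi.
   pose proof (Htau i Hi) as Hti.
   pose proof (node_split n m (HessH n D2f xs us ls (tau i)) (Z i) (U i) (HsH (tau i) Hti)) as E.
   pose proof (PD_eigen (n + m) (HessH n D2f xs us ls (tau i)) alpha (HsH (tau i) Hti) (HaH (tau i) Hti) (catv n (Z i) (U i))) as P.
   rewrite <- E, dot_cat in P. unfold Qmat, Smat, Rmat. pose proof (Hw i Hi). nra. }
 assert (HKT' : forall k l, (k < n)%nat -> (l < n)%nat -> Rabs (T k l) <= KT) by (intros; apply HKT; auto).
 assert (HXbN : forall k, (k < n)%nat -> Rabs (Xb N k) <= 9 * Y) by (intros; apply HXb; auto).
 assert (H9 : 0 <= 9 * Y) by lra.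
 assert (HT1 : Rabs (qform n n T (Xb N) (Z N)) <= e * dZN + cT * (Y * Y)).
 { eapply Rle_trans. apply (L_qf1 n n T (Xb N) (Z N) KT (9 * Y) e); auto. unfold cT, dZN. right. field. lra. }
 assert (HT2 : Rabs (qform n n T (Z N) (Xb N)) <= e * dZN + cT * (Y * Y)).
 { eapply Rle_trans. apply (L_qf2 n n T (Xb N) (Z N) KT (9 * Y) e); auto. unfold cT, dZN. right. field. lra. }
 set (cc := 2 * cQ + 2 * cS + 2 * cL4 + 2 * cL6).
 assert (HCL : - Cs + 2 * Ls <= 4 * e * Ss + cc * (Y * Y) * 2).
 { assert (E : - Cs + 2 * Ls = sum1 N (fun i => -1 * (w i * (qform n n (Qmat n D2f xs us ls (tau i)) (Xb i) (Z i) + qform n n (Qmat n D2f xs us ls (tau i)) (Z i) (Xb i) + 2 * qform n m (Smat n D2f xs us ls (tau i)) (Xb i) (U i)))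
        + 2 * (w i * (dot n (y4ext N y4 y5 i) (Z i) + dot m (y6 i) (U i))))).
   { rewrite sum1_plus, !sum1_scal. unfold Cs, Ls. ring. }
   rewrite E.
   replace (4 * e * Ss + cc * (Y * Y) * 2) with (sum1 N (fun i => 4 * e * (w i * (dot n (Z i) (Z i) + dot m (U i) (U i))) + cc * (Y * Y) * w i)).
   2:{ rewrite sum1_plus, !sum1_scal. change (sum1 N (fun i => w i)) with (sum1 N w). rewrite Hsw. unfold Ss. ring. }
   apply sum1_le. intros i Hi. pose proof (Hw i Hi) as Hwi. pose proof (Htau i Hi) as Hti.
   assert (HKQ : forall k l, (k < n)%nat -> (l < n)%nat -> Rabs (Qmat n D2f xs us ls (tau i) k l) <= KH).
   { intros. unfold Qmat. apply HKH; auto; lia. }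
   assert (HKS : forall k l, (k < n)%nat -> (l < m)%nat -> Rabs (Smat n D2f xs us ls (tau i) k l) <= KH).
   { intros. unfold Smat. apply HKH; auto; lia. }
   assert (HXbi : forall k, (k < n)%nat -> Rabs (Xb i k) <= 9 * Y) by (intros; apply HXb; auto; lia).
   pose proof (dot_sq_nonneg n (Z i)). pose proof (dot_sq_nonneg m (U i)).
   assert (B1 : Rabs (qform n n (Qmat n D2f xs us ls (tau i)) (Xb i) (Z i)) <= e * dot n (Z i) (Z i) + cQ * (Y * Y)).
   { eapply Rle_trans. apply (L_qf1 n n (Qmat n D2f xs us ls (tau i)) (Xb i) (Z i) KH (9 * Y) e); auto. unfold cQ. right. field. lra. }
   assert (B2 : Rabs (qform n n (Qmat n D2f xs us ls (tau i)) (Z i) (Xb i)) <= e * dot n (Z i) (Z i) + cQ * (Y * Y)).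
   { eapply Rle_trans. apply (L_qf2 n n (Qmat n D2f xs us ls (tau i)) (Xb i) (Z i) KH (9 * Y) e); auto. unfold cQ. right. field. lra. }
   assert (B3 : Rabs (qform n m (Smat n D2f xs us ls (tau i)) (Xb i) (U i)) <= e * dot m (U i) (U i) + cS * (Y * Y)).
   { eapply Rle_trans. apply (L_qf1 n m (Smat n D2f xs us ls (tau i)) (Xb i) (U i) KH (9 * Y) e); auto. unfold cS. right. field. lra. }
   assert (B4 : Rabs (dot n (y4ext N y4 y5 i) (Z i)) <= e * dot n (Z i) (Z i) + cL4 * (Y * Y)).
   { eapply Rle_trans. { apply (L_dot n (y4ext N y4 y5 i) (Z i) Y e); [auto | auto | intros k Hk; apply Hy4; auto]. } unfold cL4. right. field. lra. }
   assert (B5 : Rabs (dot m (y6 i) (U i)) <= e * dot m (U i) (U i) + cL6 * (Y * Y)).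
   { eapply Rle_trans. { apply (L_dot m (y6 i) (U i) Y e); [auto | auto | intros k Hk; apply Hy6; auto]. } unfold cL6. right. field. lra. }
   set (q1 := qform n n (Qmat n D2f xs us ls (tau i)) (Xb i) (Z i)) in *. set (q2 := qform n n (Qmat n D2f xs us ls (tau i)) (Z i) (Xb i)) in *.
   set (q3 := qform n m (Smat n D2f xs us ls (tau i)) (Xb i) (U i)) in *. set (l4 := dot n (y4ext N y4 y5 i) (Z i)) in *.
   set (l6 := dot m (y6 i) (U i)) in *.
   assert (G : - (q1 + q2 + 2 * q3) + 2 * (l4 + l6) <= 4 * e * (dot n (Z i) (Z i) + dot m (U i) (U i)) + cc * (Y * Y)).
   { pose proof (neg_le_abs q1). pose proof (neg_le_abs q2). pose proof (neg_le_abs q3).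
     pose proof (Rle_abs l4). pose proof (Rle_abs l6). unfold cc. lra. }
   assert (w i * (- (q1 + q2 + 2 * q3) + 2 * (l4 + l6)) <= w i * (4 * e * (dot n (Z i) (Z i) + dot m (U i) (U i)) + cc * (Y * Y))).
   { apply Rmult_le_compat_l; lra. }
   lra. }
 set (S2 := dZN + Ss).
 assert (HS2 : S2 <= 2 * kap * (Y * Y) / alpha).
 { assert (alpha * S2 <= alpha / 2 * S2 + kap * (Y * Y)).
   { pose proof (neg_le_abs (qform n n T (Xb N) (Z N))). pose proof (neg_le_abs (qform n n T (Z N) (Xb N))).
     assert (0 <= alpha * dZN) by (apply Rmult_le_pos; lra).
     unfold S2, kap. unfold cc in HCL. unfold e in *. lra. }
   apply Rmult_le_reg_l with alpha; auto. replace (alpha * (2 * kap * (Y * Y) / alpha)) with (2 * kap * (Y * Y)) by (field; lra).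
   lra. }
 assert (HSq : forall v K, 0 <= K -> 0 <= v -> v <= K * (Y * Y) -> sqrt v <= sqrt K * Y).
 { intros. rewrite <- (sqrt_square Y) by auto. rewrite <- sqrt_mult by nra. apply sqrt_le_1_alt. auto. }
 assert (Hkd : 0 <= kap / alpha) by (unfold Rdiv; apply Rmult_le_pos; [lra | left; apply Rinv_0_lt_compat; lra]).
 pose proof (pos_INR n) as HINRn.
 split.
 - unfold Xnorm. rewrite HXZ. apply HSq. lra.
   { apply Rplus_le_le_0_compat. apply dot_sq_nonneg. apply sum1_nonneg. intros. pose proof (Hw i H). pose proof (dot_sq_nonneg n (fun k => Xb i k + Z i k)). nra. }
   assert (HdXb : forall j, (j <= N)%nat -> dot n (Xb j) (Xb j) <= INR n * (9 * Y * (9 * Y))).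
   { intros. apply dot_bounded. intros; apply HXb; auto. }
   assert (Hn1 : dot n (fun k => Xb N k + Z N k) (fun k => Xb N k + Z N k) <= 2 * (INR n * (9 * Y * (9 * Y))) + 2 * dZN).
   { pose proof (dot_sum_le n (Xb N) (Z N)). pose proof (HdXb N (le_n N)). fold dZN in H. lra. }
   assert (Hn2 : sum1 N (fun i => w i * dot n (fun k => Xb i k + Z i k) (fun k => Xb i k + Z i k))
       <= sum1 N (fun i => 2 * (INR n * (9 * Y * (9 * Y))) * w i + 2 * (w i * (dot n (Z i) (Z i) + dot m (U i) (U i))))).
   { apply sum1_le. intros. pose proof (Hw i H). pose proof (dot_sum_le n (Xb i) (Z i)). pose proof (HdXb i ltac:(lia)).
     pose proof (dot_sq_nonneg m (U i)). nra. }
   rewrite sum1_plus, !sum1_scal, Hsw in Hn2. fold Ss in Hn2.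
   assert (kap / alpha * (Y * Y) = kap * (Y * Y) / alpha) by (field; lra).
   assert (0 <= Y * Y) by nra.
   unfold S2 in HS2. nra.
 - unfold Unorm. apply HSq. lra.
   { apply sum1_nonneg. intros. pose proof (Hw i H). pose proof (dot_sq_nonneg m (U i)). nra. }
   assert (sum1 N (fun i => w i * dot m (U i) (U i)) <= Ss).
   { apply sum1_le. intros. pose proof (Hw i H). pose proof (dot_sq_nonneg n (Z i)). nra. }
   assert (kap / alpha * (Y * Y) = kap * (Y * Y) / alpha) by (field; lra).
   assert (0 <= Y * Y) by nra.
   unfold S2 in HS2. nra.
Qed.
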